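(* In the setting below, for every $t\in[0,T]$ the marginal distribution $p^{\star}_t$ at time $t$ of the CTMC with the optimal generator $Q^{\star}$ started from $p_{\lim}$ satisfies $$p^{\star}_t(x)\propto \exp(V_t(x)/\alpha)\,p^{\mathrm{pre}}_t(x),\qquad x\in\mathcal{X},$$ where $p^{\mathrm{pre}}_t$ is the time-$t$ marginal of the CTMC with generator $Q^{\mathrm{pre}}$ started from $p_{\lim}$. In particular (at $t=T$) $p^{\star}_T\propto\exp(r/\alpha)p^{\mathrm{pre}}_T$.
   Context: Setting: $\mathcal{X}$ is a finite set, $T>0$, $\alpha>0$, $r:\mathcal{X}\to\mathbb{R}$, and $Q^{\mathrm{pre}}(t)$ is a pretrained time-dependent CTMC generator. A CTMC generator is a family $Q(t)=(Q_{x,y}(t))$ with $Q_{x,y}(t)\ge0$ for $x\neq y$ (rate from $x$ to $y$) and $Q_{x,x}(t)=-\sum_{y\neq x}Q_{x,y}(t)$; marginals obey $\frac{dp_t(x)}{dt}=\sum_{y\neq x}Q_{y,x}(t)p_t(y)-\sum_{y\neq x}Q_{x,y}(t)p_t(x)$. The initial distribution $p_{\lim}$ is a Dirac mass at a fixed state. $P^{Q}$ is the path law of the CTMC with generator $Q$ started at $p_{\lim}$. $Q^{\star}$ is a maximizer over all generators (fully nonparametric class) of $$J(Q)=\mathbb{E}_{P^{Q}}[r(x_T)]-\alpha\,\mathbb{E}_{P^{Q}}\Big[\int_0^T\sum_{y\neq x_t}\Big\{Q^{\mathrm{pre}}_{x_t,y}(t)-Q_{x_t,y}(t)+Q_{x_t,y}(t)\log\frac{Q_{x_t,y}(t)}{Q^{\mathrm{pre}}_{x_t,y}(t)}\Big\}dt\Big].$$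 The optimal value function is $$V_t(x)=\mathbb{E}_{x_{t:T}\sim P^{Q^{\star}}}\Big[r(x_T)-\alpha\int_t^T\sum_{y\neq x_s}\Big\{Q^{\star}_{x_s,y}(s)-Q^{\mathrm{pre}}_{x_s,y}(s)+Q^{\star}_{x_s,y}(s)\log\frac{Q^{\star}_{x_s,y}(s)}{Q^{\mathrm{pre}}_{x_s,y}(s)}\Big\}ds\;\Big|\;x_t=x\Big].$$ Generators are assumed regular enough (e.g. continuous in $t$) that the Kolmogorov equations have unique solutions; $0\log(0/0)=0$. *)

(* Defs.v *)
From Stdlib Require Import Reals List.
From Coquelicot Require Import Coquelicot.
Open Scope R_scope.

Record finite_type := FiniteType {
  ft_car :> Type;
  ft_eq_dec : forall x y : ft_car, {x = y} + {x <> y};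
  ft_enum : list ft_car;
  ft_nodup : NoDup ft_enum;
  ft_full : forall x, In x ft_enum }.

Definition fsum {X : finite_type} (f : X -> R) : R :=
  fold_right (fun x acc => f x + acc) 0 (ft_enum X).

Definition offdiag_sum {X : finite_type} (x : X) (f : X -> R) : R :=
  fsum (fun y => if ft_eq_dec X y x then 0 else f y).

Definition dirac {X : finite_type} (x0 : X) : X -> R :=
  fun x => if ft_eq_dec X x x0 then 1 else 0.

(** time-dependent CTMC generator: Q t x y = rate from x to y at time t *)
Definition is_generator {X : finite_type} (Q : R -> X -> X -> R) : Prop :=
  (forall t (x y : X), x <> y -> 0 <= Q t x y) /\
  (forall t (x : X), Q t x x = - offdiag_sum x (Q t x)).

Definition cont_on (a b : R) (f : R -> R) : Prop :=
  forall t, a <= t <= b ->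
    filterlim f (within (fun s => a <= s <= b) (locally t)) (locally (f t)).

Definition regular_generator {X : finite_type} (T : R) (Q : R -> X -> X -> R) : Prop :=
  is_generator Q /\ (forall x y : X, cont_on 0 T (fun t => Q t x y)).

Definition kolmogorov_forward {X : finite_type} (Q : R -> X -> X -> R)
    (s T : R) (p0 : X -> R) (p : R -> X -> R) : Prop :=
  (forall x, p s x = p0 x) /\
  (forall x, cont_on s T (fun t => p t x)) /\
  (forall t x, s < t < T ->
     is_derive (fun u => p u x) t
       (offdiag_sum x (fun y => Q t y x * p t y)
        - offdiag_sum x (fun y => Q t x y) * p t x)).

Definition xlogxy (a b : R) : R :=
  if Req_EM_T a 0 then 0 else a * ln (a / b).

Definition kl_rate {X : finite_type} (Qpre Q : R -> X -> X -> R) (t : R) (x : X) : R :=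
  offdiag_sum x (fun y => Qpre t x y - Q t x y + xlogxy (Q t x y) (Qpre t x y)).

(** admissible generators: regular, and absolutely continuous w.r.t. Qpre
    (Q_{x,y}(t) = 0 whenever Qpre_{x,y}(t) = 0); otherwise the KL term is +oo. *)
Definition admissible {X : finite_type} (T : R) (Qpre Q : R -> X -> X -> R) : Prop :=
  regular_generator T Q /\
  (forall t (x y : X), 0 <= t <= T -> x <> y -> Qpre t x y = 0 -> Q t x y = 0).

Definition exp_kl {X : finite_type} (Qpre Q : R -> X -> X -> R) (p : R -> X -> R) (t : R) : R :=
  fsum (fun x => p t x * kl_rate Qpre Q t x).

Definition finite_cost {X : finite_type} (T : R) (Qpre Q : R -> X -> X -> R)
    (p : R -> X -> R) : Prop :=
  ex_RInt (exp_kl Qpre Q p) 0 T.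

Definition objective {X : finite_type} (T alpha : R) (r : X -> R)
    (Qpre Q : R -> X -> X -> R) (p : R -> X -> R) : R :=
  fsum (fun x => p T x * r x) - alpha * RInt (exp_kl Qpre Q p) 0 T.

(** V_t(x), where K t x s z = P(x_s = z | x_t = x) under Q* (s in [t,T]) *)
Definition value_fn {X : finite_type} (T alpha : R) (r : X -> R)
    (Qpre Qs : R -> X -> X -> R) (K : R -> X -> R -> X -> R) (t : R) (x : X) : R :=
  fsum (fun z => K t x T z * r z)
  - alpha * RInt (exp_kl Qpre Qs (K t x)) t T.

(* Main.v *)
Require Import Defs.
From Stdlib Require Import Reals List Lra Lia Psatz.
From Coquelicot Require Import Coquelicot.
Open Scope R_scope.


Definition lsum {X : Type} (l : list X) (f : X -> R) :=
  fold_right (fun x acc => f x + acc) 0 l.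

Lemma lsum_ext {X : Type} (l : list X) f g :
  (forall x, In x l -> f x = g x) -> lsum l f = lsum l g.
Proof.
  induction l as [|a l IH]; simpl; intros H; auto.
  rewrite (H a (or_introl eq_refl)), IH; auto.
Qed.

Lemma fsum_ext {X : finite_type} (f g : X -> R) :
  (forall x, f x = g x) -> fsum f = fsum g.
Proof. intros H; apply lsum_ext; auto. Qed.

Lemma lsum_plus {X : Type} (l : list X) f g :
  lsum l (fun x => f x + g x) = lsum l f + lsum l g.
Proof. induction l; simpl; [lra|]. rewrite IHl; lra. Qed.

Lemma fsum_plus {X : finite_type} (f g : X -> R) :
  fsum (fun x => f x + g x) = fsum f + fsum g.
Proof. apply lsum_plus. Qed.

Lemma lsum_scal {X : Type} (l : list X) c f :
  lsum l (fun x => c * f x) = c * lsum l f.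
Proof. induction l; simpl; [lra|]. rewrite IHl; lra. Qed.

Lemma fsum_scal {X : finite_type} c (f : X -> R) :
  fsum (fun x => c * f x) = c * fsum f.
Proof. apply lsum_scal. Qed.

Lemma fsum_opp {X : finite_type} (f : X -> R) :
  fsum (fun x => - f x) = - fsum f.
Proof. transitivity (fsum (fun x => -1 * f x)). apply fsum_ext; intros; lra.
  rewrite fsum_scal; lra. Qed.

Lemma fsum_minus {X : finite_type} (f g : X -> R) :
  fsum (fun x => f x - g x) = fsum f - fsum g.
Proof. unfold Rminus. rewrite fsum_plus, fsum_opp. reflexivity. Qed.

Lemma fsum_zero {X : finite_type} : fsum (fun _ : X => 0) = 0.
Proof. unfold fsum; induction (ft_enum X); simpl; lra. Qed.

Lemma lsum_le {X : Type} (l : list X) f g :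
  (forall x, f x <= g x) -> lsum l f <= lsum l g.
Proof. intros H; induction l; simpl; [lra|]. specialize (H a); lra. Qed.

Lemma fsum_le {X : finite_type} (f g : X -> R) :
  (forall x, f x <= g x) -> fsum f <= fsum g.
Proof. apply lsum_le. Qed.

Lemma fsum_nonneg {X : finite_type} (f : X -> R) :
  (forall x, 0 <= f x) -> 0 <= fsum f.
Proof. intros H. rewrite <- (@fsum_zero X) at 1. apply fsum_le; auto. Qed.

Lemma lsum_swap {X Y : Type} (l : list X) (m : list Y) F :
  lsum l (fun x => lsum m (fun y => F x y)) = lsum m (fun y => lsum l (fun x => F x y)).
Proof.
  induction l as [|a l IH]; simpl.
  - induction m; simpl; auto; lra.
  - rewrite IH. rewrite <- lsum_plus. reflexivity.
Qed.

Lemma fsum_swap {X Y : finite_type} (F : X -> Y -> R) :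
  fsum (fun x => fsum (fun y => F x y)) = fsum (fun y => fsum (fun x => F x y)).
Proof. apply lsum_swap. Qed.

Lemma lsum_split {X : Type} (dec : forall x y : X, {x = y} + {x <> y}) (l : list X) (x : X) f :
  NoDup l -> In x l ->
  lsum l f = f x + lsum l (fun y => if dec y x then 0 else f y).
Proof.
  induction l as [|a l IH]; simpl; intros Hnd Hin; [contradiction|].
  inversion Hnd; subst.
  destruct (dec a x) as [e|ne].
  - subst. rewrite Rplus_0_l.
    f_equal. apply lsum_ext. intros y Hy.
    destruct (dec y x); [subst; contradiction|]; auto.
  - destruct Hin as [e|Hin]; [congruence|]. rewrite (IH H2 Hin). lra.
Qed.

Lemma fsum_split {X : finite_type} (x : X) (f : X -> R) :
  fsum f = f x + offdiag_sum x f.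
Proof. apply lsum_split; [apply ft_nodup | apply ft_full]. Qed.

Lemma offdiag_ext {X : finite_type} (x : X) f g :
  (forall y, y <> x -> f y = g y) -> offdiag_sum x f = offdiag_sum x g.
Proof. intros H; unfold offdiag_sum; apply fsum_ext; intros y.
  destruct (ft_eq_dec X y x); auto. Qed.

Lemma offdiag_plus {X : finite_type} (x : X) f g :
  offdiag_sum x (fun y => f y + g y) = offdiag_sum x f + offdiag_sum x g.
Proof. unfold offdiag_sum. rewrite <- fsum_plus. apply fsum_ext; intros y.
  destruct (ft_eq_dec X y x); lra. Qed.

Lemma offdiag_scal {X : finite_type} (x : X) c f :
  offdiag_sum x (fun y => c * f y) = c * offdiag_sum x f.
Proof. unfold offdiag_sum. rewrite <- fsum_scal. apply fsum_ext; intros y.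
  destruct (ft_eq_dec X y x); lra. Qed.

Lemma offdiag_minus {X : finite_type} (x : X) f g :
  offdiag_sum x (fun y => f y - g y) = offdiag_sum x f - offdiag_sum x g.
Proof. unfold offdiag_sum. rewrite <- fsum_minus. apply fsum_ext; intros y.
  destruct (ft_eq_dec X y x); lra. Qed.

Lemma offdiag_nonneg {X : finite_type} (x : X) f :
  (forall y, y <> x -> 0 <= f y) -> 0 <= offdiag_sum x f.
Proof. intros H; unfold offdiag_sum; apply fsum_nonneg; intros y.
  destruct (ft_eq_dec X y x); [lra|auto]. Qed.

Lemma offdiag_le {X : finite_type} (x : X) f g :
  (forall y, y <> x -> f y <= g y) -> offdiag_sum x f <= offdiag_sum x g.
Proof. intros H; unfold offdiag_sum; apply fsum_le; intros y.
  destruct (ft_eq_dec X y x); [lra|auto]. Qed.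

Lemma offdiag_zero {X : finite_type} (x : X) : offdiag_sum x (fun _ => 0) = 0.
Proof. unfold offdiag_sum. transitivity (fsum (fun _ : X => 0)); [|apply fsum_zero].
  apply fsum_ext; intros y. destruct (ft_eq_dec X y x); lra. Qed.

Lemma fsum_dirac {X : finite_type} (x0 : X) f :
  fsum (fun x => dirac x0 x * f x) = f x0.
Proof. rewrite (fsum_split x0).
  rewrite (offdiag_ext x0 _ (fun _ => 0)).
  - rewrite offdiag_zero. unfold dirac. destruct (ft_eq_dec X x0 x0); [lra|congruence].
  - intros y Hy. unfold dirac. destruct (ft_eq_dec X y x0); [congruence|lra]. Qed.

Lemma fsum_ge_term {X : finite_type} (f : X -> R) x :
  (forall y, 0 <= f y) -> f x <= fsum f.
Proof. intros H. rewrite (fsum_split x). assert (0 <= offdiag_sum x f).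
  apply offdiag_nonneg; auto. lra. Qed.

Lemma offdiag_ge_term {X : finite_type} (x : X) (f : X -> R) y :
  y <> x -> (forall z, z <> x -> 0 <= f z) -> f y <= offdiag_sum x f.
Proof. intros Hy H. unfold offdiag_sum.
  assert (E : f y = (fun z => if ft_eq_dec X z x then 0 else f z) y).
  { destruct (ft_eq_dec X y x); congruence. }
  rewrite E. apply (fsum_ge_term (fun z => if ft_eq_dec X z x then 0 else f z)). intros z.
  destruct (ft_eq_dec X z x); [lra|auto]. Qed.

Lemma fsum_abs {X : finite_type} (f : X -> R) : Rabs (fsum f) <= fsum (fun x => Rabs (f x)).
Proof. unfold fsum. induction (ft_enum X); simpl. rewrite Rabs_R0; lra.
  eapply Rle_trans. apply Rabs_triang. lra. Qed.

Lemma fsum_const {X : finite_type} (c : R) : fsum (fun _ : X => c) = c * fsum (fun _ : X => 1).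
Proof. rewrite <- fsum_scal. apply fsum_ext; intros; lra. Qed.

Lemma fsum_card_nonneg {X : finite_type} : 0 <= fsum (fun _ : X => 1).
Proof. apply fsum_nonneg; intros; lra. Qed.


Definition clamp (a b t : R) := Rmax a (Rmin b t).

Lemma clamp_in a b t : a <= b -> a <= clamp a b t <= b.
Proof. intros. unfold clamp, Rmax, Rmin.
  repeat destruct Rle_dec; lra. Qed.

Lemma clamp_id a b t : a <= t <= b -> clamp a b t = t.
Proof. intros. unfold clamp, Rmax, Rmin.
  repeat destruct Rle_dec; lra. Qed.

Lemma clamp_lip a b s t : a <= b -> Rabs (clamp a b s - clamp a b t) <= Rabs (s - t).
Proof. intros. unfold clamp, Rmax, Rmin.
  repeat destruct Rle_dec; unfold Rabs; repeat destruct Rcase_abs; lra. Qed.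

Lemma continuous_clamp a b t : a <= b -> continuous (clamp a b) t.
Proof. intros Hab. apply filterlim_locally. intros eps.
  exists eps. intros s Hs. unfold ball in *; simpl in *. unfold AbsRing_ball in *.
  simpl in *. unfold abs, minus, plus, opp in *; simpl in *.
  eapply Rle_lt_trans; [apply clamp_lip; auto|]. auto. Qed.

Lemma cont_on_ext a b f t : a <= b -> cont_on a b f ->
  continuous (fun s => f (clamp a b s)) t.
Proof. intros Hab Hc. unfold continuous.
  apply filterlim_comp with (G := within (fun s => a <= s <= b) (locally (clamp a b t))).
  - intros P HP. unfold filtermap. unfold within in HP.
    pose proof (continuous_clamp a b t Hab) as Hcl.
    specialize (Hcl _ HP). unfold filtermap in Hcl.
    eapply filter_imp; [|exact Hcl]. intros s Hs. apply Hs. apply clamp_in; auto.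
  - apply Hc. apply clamp_in; auto. Qed.

Lemma cont_on_of_cont a b f g :
  (forall t, a <= t <= b -> f t = g t) ->
  (forall t, a <= t <= b -> continuous g t) -> cont_on a b f.
Proof. intros E Hg t Ht. rewrite (E t Ht).
  intros P HP. specialize (Hg t Ht _ HP). unfold filtermap, within in *.
  eapply filter_imp; [|exact Hg]. intros s Hs Hd. rewrite E; auto. Qed.

Lemma cont_on_sub a b c d f : a <= c -> d <= b -> cont_on a b f -> cont_on c d f.
Proof. intros H1 H2 Hf t Ht P HP. assert (Ht' : a <= t <= b) by lra.
  specialize (Hf t Ht' P HP). unfold filtermap, within in *.
  eapply filter_imp; [|exact Hf]. intros s Hs Hd. apply Hs; lra. Qed.

Lemma cont_on_plus a b f g : a <= b -> cont_on a b f -> cont_on a b g ->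
  cont_on a b (fun t => f t + g t).
Proof. intros Hab Hf Hg.
  apply cont_on_of_cont with (g := fun t => f (clamp a b t) + g (clamp a b t)).
  - intros t Ht; rewrite clamp_id; auto.
  - intros t _. apply (continuous_plus (fun s => f (clamp a b s)) (fun s => g (clamp a b s)));
      apply cont_on_ext; auto. Qed.

Lemma cont_on_mult a b f g : a <= b -> cont_on a b f -> cont_on a b g ->
  cont_on a b (fun t => f t * g t).
Proof. intros Hab Hf Hg.
  apply cont_on_of_cont with (g := fun t => f (clamp a b t) * g (clamp a b t)).
  - intros t Ht; rewrite clamp_id; auto.
  - intros t _. apply (continuous_mult (fun s => f (clamp a b s)) (fun s => g (clamp a b s)));
      apply cont_on_ext; auto. Qed.

Lemma cont_on_const a b c : cont_on a b (fun _ => c).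
Proof. intros t _. apply filterlim_const. Qed.

Lemma cont_on_id a b : a <= b -> cont_on a b (fun t => t).
Proof. intros Hab. apply cont_on_of_cont with (g := fun t => t). auto.
  intros; apply continuous_id. Qed.

Lemma cont_on_comp a b f g : a <= b -> cont_on a b f ->
  (forall t, a <= t <= b -> continuous g (f t)) -> cont_on a b (fun t => g (f t)).
Proof. intros Hab Hf Hg.
  apply cont_on_of_cont with (g := fun t => g (f (clamp a b t))).
  - intros t Ht; rewrite clamp_id; auto.
  - intros t Ht. apply (continuous_comp (fun s => f (clamp a b s)) g).
    apply cont_on_ext; auto. rewrite clamp_id; auto. Qed.

Lemma cont_on_opp a b f : a <= b -> cont_on a b f -> cont_on a b (fun t => - f t).
Proof. intros Hab Hf. apply (cont_on_comp a b f Ropp); auto.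
  intros t _. apply (continuous_opp (fun x : R => x)). apply continuous_id. Qed.

Lemma cont_on_minus a b f g : a <= b -> cont_on a b f -> cont_on a b g ->
  cont_on a b (fun t => f t - g t).
Proof. intros. apply cont_on_plus; auto. apply cont_on_opp; auto. Qed.

Lemma cont_on_inv a b f : a <= b -> cont_on a b f -> (forall t, a <= t <= b -> f t <> 0) ->
  cont_on a b (fun t => / f t).
Proof. intros Hab Hf Hn. apply (cont_on_comp a b f Rinv); auto.
  intros t Ht. apply (continuous_Rinv_comp (fun x => x)). apply continuous_id. auto. Qed.

Lemma cont_on_ln a b f : a <= b -> cont_on a b f -> (forall t, a <= t <= b -> 0 < f t) ->
  cont_on a b (fun t => ln (f t)).
Proof. intros Hab Hf Hn. apply (cont_on_comp a b f ln); auto.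
  intros t Ht. apply continuous_ln; auto. Qed.

Lemma cont_on_sqrt a b f : a <= b -> cont_on a b f -> cont_on a b (fun t => sqrt (f t)).
Proof. intros Hab Hf. apply (cont_on_comp a b f sqrt); auto.
  intros t Ht. apply continuous_sqrt. Qed.

Lemma cont_on_abs a b f : a <= b -> cont_on a b f -> cont_on a b (fun t => Rabs (f t)).
Proof. intros Hab Hf. apply (cont_on_comp a b f Rabs); auto.
  intros t Ht. apply continuous_Rabs. Qed.

Lemma cont_on_exp a b f : a <= b -> cont_on a b f -> cont_on a b (fun t => exp (f t)).
Proof. intros Hab Hf. apply (cont_on_comp a b f exp); auto.
  intros t Ht. apply continuous_exp. Qed.

Lemma cont_on_lsum {X : Type} (l : list X) a b (F : R -> X -> R) : a <= b ->
  (forall x, cont_on a b (fun t => F t x)) -> cont_on a b (fun t => lsum l (F t)).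
Proof. intros Hab H. induction l; simpl.
  - apply cont_on_const.
  - apply cont_on_plus; auto. Qed.

Lemma cont_on_fsum {X : finite_type} a b (F : R -> X -> R) : a <= b ->
  (forall x, cont_on a b (fun t => F t x)) -> cont_on a b (fun t => fsum (F t)).
Proof. intros. apply cont_on_lsum; auto. Qed.

Lemma cont_on_offdiag {X : finite_type} a b (x : X) (F : R -> X -> R) : a <= b ->
  (forall y, y <> x -> cont_on a b (fun t => F t y)) -> cont_on a b (fun t => offdiag_sum x (F t)).
Proof. intros Hab H. unfold offdiag_sum. apply cont_on_fsum; auto.
  intros y. destruct (ft_eq_dec X y x). apply cont_on_const. auto. Qed.

Lemma cont_on_ext_eq a b f g : (forall t, a <= t <= b -> f t = g t) -> cont_on a b f -> cont_on a b g.
Proof. intros E Hf t Ht P HP. rewrite <- E in HP by auto. specialize (Hf t Ht P HP).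
  unfold filtermap, within in *. eapply filter_imp; [|exact Hf].
  intros s Hs Hd. rewrite <- E; auto. Qed.

Lemma is_derive_clamp a b (f : R -> R) t (l : R) : a < t < b -> is_derive f t l ->
  is_derive (fun s => f (clamp a b s)) t l.
Proof. intros Ht Hd. apply is_derive_ext_loc with (f := f); auto.
  assert (Hp : 0 < Rmin (t - a) (b - t)) by (apply Rmin_pos; lra).
  exists (mkposreal _ Hp). intros s Hs. unfold ball in Hs; simpl in Hs.
  unfold AbsRing_ball, abs, minus, plus, opp in Hs; simpl in Hs.
  pose proof (Rmin_l (t - a) (b - t)); pose proof (Rmin_r (t - a) (b - t)).
  rewrite clamp_id; auto. unfold Rabs in Hs; destruct Rcase_abs in Hs; lra. Qed.

Lemma mono_lemma a b (f df : R -> R) : a <= b -> cont_on a b f ->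
  (forall t, a < t < b -> is_derive f t (df t)) ->
  (forall t, a <= t <= b -> df t <= 0) -> f b <= f a.
Proof. intros Hab Hf Hd Hneg.
  destruct (MVT_gen (fun s => f (clamp a b s)) a b df) as [c [Hc E]].
  - intros x Hx. rewrite Rmin_left, Rmax_right in Hx by lra. apply is_derive_clamp; auto.
  - intros x Hx. apply continuity_pt_filterlim. apply cont_on_ext; auto.
  - rewrite Rmin_left, Rmax_right in Hc by lra.
    rewrite !clamp_id in E by lra. specialize (Hneg c Hc).
    assert (df c * (b - a) <= 0) by nra. lra. Qed.

Lemma const_lemma a b (f : R -> R) : a <= b -> cont_on a b f ->
  (forall t, a < t < b -> is_derive f t 0) -> f b = f a.
Proof. intros Hab Hf Hd. apply Rle_antisym.
  - apply (mono_lemma a b f (fun _ => 0)); auto; intros; lra.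
  - assert (- f b <= - f a); [|lra].
    apply (mono_lemma a b (fun t => - f t) (fun _ => 0)); auto.
    + apply cont_on_opp; auto.
    + intros t Ht. specialize (Hd t Ht). apply (is_derive_opp f) in Hd.
      simpl in Hd. unfold opp in Hd; simpl in Hd. rewrite Ropp_0 in Hd. exact Hd.
    + intros; lra. Qed.

Lemma ex_RInt_cont_on a b (g : R -> R) : a <= b -> cont_on a b g -> ex_RInt g a b.
Proof. intros Hab Hg.
  apply ex_RInt_ext with (f := fun s => g (clamp a b s)).
  - intros x Hx. rewrite Rmin_left, Rmax_right in Hx by lra. rewrite clamp_id; auto; lra.
  - apply (@ex_RInt_continuous R_CompleteNormedModule). intros z _. apply cont_on_ext; auto. Qed.

Lemma RInt_abs_ext a b (g : R -> R) : a <= b -> (forall t, a < t < b -> g t = g t) -> True.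
Proof. auto. Qed.

Lemma ftc_lemma a b (g G : R -> R) : a <= b -> cont_on a b g -> cont_on a b G ->
  (forall t, a < t < b -> is_derive G t (g t)) -> RInt g a b = G b - G a.
Proof. intros Hab Hg HG Hd.
  set (gc := fun s => g (clamp a b s)).
  assert (Hgc : forall t, continuous gc t) by (intros; apply cont_on_ext; auto).
  assert (Hex : forall u v, ex_RInt gc u v).
  { intros u v. apply (@ex_RInt_continuous R_CompleteNormedModule). intros; auto. }
  set (Phi := fun t => RInt gc a t).
  assert (HPd : forall t, is_derive Phi t (gc t)).
  { intros t. apply (is_derive_RInt gc Phi a t). 2: auto.
    apply filter_forall. intros z. apply (RInt_correct (V := R_CompleteNormedModule)). auto. }
  assert (E : RInt g a b = Phi b).
  { unfold Phi. apply RInt_ext. intros x Hx. rewrite Rmin_left, Rmax_right in Hx by lra.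
    unfold gc. rewrite clamp_id; auto; lra. }
  assert (HP0 : Phi a = 0). { unfold Phi. rewrite RInt_point. reflexivity. }
  assert (C : (fun t => G t - Phi t) b = (fun t => G t - Phi t) a).
  { apply (const_lemma a b (fun t => G t - Phi t)); auto.
    - apply cont_on_minus; auto. apply cont_on_of_cont with (g := Phi); auto.
      intros t _. apply (@ex_derive_continuous R_AbsRing R_NormedModule Phi t). eexists; apply HPd.
    - intros t Ht. replace 0 with (g t - gc t).
      apply (is_derive_minus G Phi t (g t) (gc t)); auto.
      unfold gc; rewrite clamp_id; lra. }
  simpl in C. lra. Qed.


Lemma abs_le_inv x c : Rabs x <= c -> - c <= x <= c.
Proof. unfold Rabs; destruct Rcase_abs; lra. Qed.

Lemma gronwall a b (phi dphi : R -> R) K :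
  a <= b -> cont_on a b phi -> (forall t, a <= t <= b -> 0 <= phi t) -> phi a = 0 ->
  (forall t, a < t < b -> is_derive phi t (dphi t)) ->
  (forall t, a <= t <= b -> dphi t <= K * phi t) ->
  forall t, a <= t <= b -> phi t = 0.
Proof.
  intros Hab Hc Hpos H0 Hd Hle t Ht.
  set (psi := fun s => phi s * exp (- K * s)).
  assert (M : psi t <= psi a).
  { apply (mono_lemma a t psi (fun s => dphi s * exp (-K * s) + phi s * (-K * exp (-K * s)))).
    - lra.
    - unfold psi. apply cont_on_mult. lra. apply (cont_on_sub a b); auto; lra.
      apply cont_on_exp. lra. apply cont_on_mult. lra. apply cont_on_const. apply cont_on_id. lra.
    - intros s Hs. unfold psi.
      apply (is_derive_mult phi (fun s => exp (-K * s))). apply Hd; lra.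
      auto_derive; auto. ring. intros; apply Rmult_comm.
    - intros s Hs. specialize (Hle s ltac:(lra)). pose proof (exp_pos (-K*s)).
      assert ((dphi s - K * phi s) * exp (-K*s) <= 0).
      { apply Rmult_le_0_r; lra. } nra. }
  unfold psi in M. rewrite H0 in M. pose proof (exp_pos (-K*t)).
  pose proof (Hpos t Ht).
  assert (phi t <= 0). { destruct (Rle_dec (phi t) 0); auto. exfalso. nra. }
  lra.
Qed.

Definition negp (z : R) := Rmin z 0.

Lemma negp_sq_derive z : is_derive (fun u => negp u * negp u) z (2 * negp z).
Proof.
  unfold negp. destruct (Rlt_or_le z 0) as [Hz|Hz].
  - apply is_derive_ext_loc with (f := fun u => u * u).
    + assert (Hp : 0 < - z) by lra. exists (mkposreal _ Hp). intros u Hu.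
      unfold ball in Hu; simpl in Hu. unfold AbsRing_ball, abs, minus, plus, opp in Hu; simpl in Hu.
      unfold Rabs in Hu; destruct Rcase_abs in Hu; rewrite Rmin_left; lra.
    + rewrite Rmin_left by lra. auto_derive; auto. ring.
  - destruct (Rle_lt_or_eq_dec 0 z Hz) as [Hz'|Hz'].
    + apply is_derive_ext_loc with (f := fun _ => 0).
      * exists (mkposreal _ Hz'). intros u Hu.
        unfold ball in Hu; simpl in Hu. unfold AbsRing_ball, abs, minus, plus, opp in Hu; simpl in Hu.
        unfold Rabs in Hu; destruct Rcase_abs in Hu; rewrite Rmin_right; lra.
      * rewrite Rmin_right by lra. replace (2 * 0) with 0 by ring. apply (is_derive_const 0).
    + subst z. rewrite Rmin_right by lra. replace (2*0) with 0 by ring.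
      apply is_derive_Reals. intros eps Heps. exists (mkposreal _ Heps).
      intros h Hh Hhs. simpl in Hhs. rewrite Rplus_0_l, (Rmin_right 0 0) by lra.
      replace ((Rmin h 0 * Rmin h 0 - 0 * 0) / h - 0) with (Rmin h 0 * (Rmin h 0 / h)) by (field; auto).
      unfold Rmin. destruct Rle_dec.
      * replace (h / h) with 1 by (field; auto). rewrite Rmult_1_r. auto.
      * replace (0 / h) with 0 by (field; auto). rewrite Rmult_0_r, Rabs_R0. auto.
Qed.

Lemma continuous_negp z : continuous negp z.
Proof. apply continuous_ext with (f := fun u => (u - Rabs u) / 2).
  - intros u. unfold negp, Rmin, Rabs. destruct Rle_dec; destruct Rcase_abs; lra.
  - apply (continuous_mult (fun u => u - Rabs u) (fun _ => /2)).
    apply (continuous_minus (fun u => u) Rabs). apply continuous_id. apply continuous_Rabs.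
    apply continuous_const. Qed.

Lemma negp_le z : negp z <= 0. Proof. unfold negp; apply Rmin_r. Qed.
Lemma negp_le' z : negp z <= z. Proof. unfold negp; apply Rmin_l. Qed.
Lemma negp_mul z : negp z * z = negp z * negp z.
Proof. unfold negp, Rmin. destruct Rle_dec; lra. Qed.
Lemma negp_zero z : 0 <= z -> negp z = 0.
Proof. unfold negp; intros; rewrite Rmin_right; lra. Qed.
Lemma negp_sq0 z : negp z * negp z = 0 -> 0 <= z.
Proof. unfold negp, Rmin. destruct Rle_dec; nra. Qed.

Lemma is_derive_lsum {X : Type} (l : list X) (F : R -> X -> R) dF t :
  (forall x, is_derive (fun u => F u x) t (dF x)) ->
  is_derive (fun u => lsum l (F u)) t (lsum l dF).
Proof. intros H. induction l; simpl.
  - apply (is_derive_const 0).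
  - apply (is_derive_plus (fun u => F u a) (fun u => lsum l (F u))); auto. Qed.

Lemma is_derive_fsum {X : finite_type} (F : R -> X -> R) dF t :
  (forall x, is_derive (fun u => F u x) t (dF x)) ->
  is_derive (fun u => fsum (F u)) t (fsum dF).
Proof. apply is_derive_lsum. Qed.

Lemma metzler_pos {X : finite_type} a b (M : R -> X -> X -> R) (p : R -> X -> R) C :
  a <= b -> 0 <= C ->
  (forall t x y, a <= t <= b -> Rabs (M t x y) <= C) ->
  (forall t x y, a <= t <= b -> x <> y -> 0 <= M t x y) ->
  (forall x, cont_on a b (fun t => p t x)) ->
  (forall t x, a < t < b -> is_derive (fun u => p u x) t (fsum (fun y => M t x y * p t y))) ->
  (forall x, 0 <= p a x) ->
  forall t x, a <= t <= b -> 0 <= p t x.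
Proof.
  intros Hab HC HM Hoff Hc Hd H0 t x Ht.
  set (N := fsum (fun _ : X => 1)).
  set (phi := fun s => fsum (fun z => negp (p s z) * negp (p s z))).
  set (dphi := fun s => fsum (fun z => 2 * negp (p s z) * fsum (fun y => M s z y * p s y))).
  assert (G : forall s, a <= s <= b -> phi s = 0).
  { apply (gronwall a b phi dphi (2 * C * N)); auto.
    - unfold phi. apply cont_on_fsum; auto. intros z. apply cont_on_mult; auto;
      apply (cont_on_comp a b (fun s => p s z) negp); auto;
      intros s _; apply continuous_negp.
    - intros s Hs. apply fsum_nonneg. intros z. nra.
    - unfold phi. rewrite (fsum_ext _ (fun _ => 0)). apply fsum_zero.
      intros z. rewrite negp_zero; auto; lra.
    - intros s Hs. unfold phi, dphi. apply is_derive_fsum. intros z.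
      pose proof (is_derive_comp (fun u => negp u * negp u) (fun u => p u z) s _ _
        (negp_sq_derive (p s z)) (Hd s z Hs)) as D.
      simpl in D. unfold scal in D; simpl in D. unfold mult in D; simpl in D.
      replace (2 * negp (p s z) * fsum (fun y => M s z y * p s y))
        with (fsum (fun y => M s z y * p s y) * (2 * negp (p s z))) by ring. exact D.
    - intros s Hs. unfold dphi, phi.
      set (n := fun z => negp (p s z)).
      assert (PB : forall z y, 2 * n z * (M s z y * p s y) <= C * (n z * n z + n y * n y)).
      { intros z y. unfold n. pose proof (negp_le (p s z)) as A1; pose proof (negp_le (p s y)) as A2.
        pose proof (negp_le' (p s y)) as A3. pose proof (abs_le_inv _ _ (HM s z y Hs)) as A4.
        destruct (ft_eq_dec X z y) as [e|ne].
        - subst y. pose proof (negp_mul (p s z)) as A5.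
          assert (E1 : 2 * negp (p s z) * (M s z z * p s z) = 2 * M s z z * (negp (p s z) * negp (p s z))).
          { rewrite <- A5. ring. }
          assert (0 <= negp (p s z) * negp (p s z)) by nra.
          assert (M s z z * (negp (p s z) * negp (p s z)) <= C * (negp (p s z) * negp (p s z))).
          { apply Rmult_le_compat_r; lra. }
          lra.
        - pose proof (Hoff s z y Hs ne) as A6.
          assert (B1 : 0 <= - negp (p s z) * (p s y - negp (p s y))) by (apply Rmult_le_pos; lra).
          assert (B2 : 0 <= negp (p s z) * negp (p s y)).
          { replace (negp (p s z) * negp (p s y)) with ((- negp (p s z)) * (- negp (p s y))) by ring.
            apply Rmult_le_pos; lra. }
          assert (B3 : M s z y * (negp (p s z) * p s y) <= M s z y * (negp (p s z) * negp (p s y))).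
          { apply Rmult_le_compat_l; lra. }
          assert (B4 : M s z y * (negp (p s z) * negp (p s y)) <= C * (negp (p s z) * negp (p s y))).
          { apply Rmult_le_compat_r; lra. }
          assert (B5 : 2 * (negp (p s z) * negp (p s y)) <= negp (p s z) * negp (p s z) + negp (p s y) * negp (p s y)).
          { pose proof (Rle_0_sqr (negp (p s z) - negp (p s y))). unfold Rsqr in *. lra. }
          assert (B6 : C * (2 * (negp (p s z) * negp (p s y))) <= C * (negp (p s z) * negp (p s z) + negp (p s y) * negp (p s y))).
          { apply Rmult_le_compat_l; lra. }
          replace (2 * negp (p s z) * (M s z y * p s y)) with (2 * (M s z y * (negp (p s z) * p s y))) by ring.
          lra. }
      eapply Rle_trans.
      { apply (fsum_le _ (fun z => fsum (fun y => C * (n z * n z + n y * n y)))).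
        intros z. rewrite <- fsum_scal. apply fsum_le. intros y.
        specialize (PB z y). unfold n in *. lra. }
      right.
      assert (I1 : forall z, fsum (fun y => C * (n z * n z + n y * n y)) =
                C * (n z * n z) * N + C * fsum (fun y => n y * n y)).
      { intros z. rewrite (fsum_ext _ (fun y => C * (n z * n z) + C * (n y * n y))) by (intros; ring).
        rewrite fsum_plus, fsum_const, fsum_scal. fold N. ring. }
      rewrite (fsum_ext _ _ I1), fsum_plus.
      rewrite (fsum_ext _ (fun z => (C * N) * (n z * n z))) by (intros; ring).
      rewrite (fsum_scal (C*N) (fun z => n z * n z)), (fsum_const (C * fsum (fun y => n y * n y))). fold N. unfold n. ring. }
  specialize (G t Ht). unfold phi in G.
  apply negp_sq0. apply Rle_antisym.
  - rewrite <- G. apply (fsum_ge_term (fun z => negp (p t z) * negp (p t z))). intros; nra.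
  - nra.
Qed.


Lemma continuous_lsum {X : Type} (l : list X) (F : R -> X -> R) t :
  (forall x, continuous (fun s => F s x) t) -> continuous (fun s => lsum l (F s)) t.
Proof. intros H. induction l; simpl.
  - apply continuous_const.
  - apply (continuous_plus (fun s => F s a) (fun s => lsum l (F s))); auto. Qed.

Lemma continuous_fsum {X : finite_type} (F : R -> X -> R) t :
  (forall x, continuous (fun s => F s x) t) -> continuous (fun s => fsum (F s)) t.
Proof. apply continuous_lsum. Qed.

Lemma bound_cont a b f : a <= b -> cont_on a b f -> exists C, forall t, a <= t <= b -> Rabs (f t) <= C.
Proof. intros Hab Hf.
  destruct (continuity_ab_maj (fun s => Rabs (f (clamp a b s))) a b Hab) as [m [Hm _]].
  - intros c _. apply continuity_pt_filterlim.
    apply (continuous_comp (fun s => f (clamp a b s)) Rabs). apply cont_on_ext; auto.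
    apply continuous_Rabs.
  - exists (Rabs (f (clamp a b m))). intros t Ht. specialize (Hm t Ht). simpl in Hm.
    rewrite clamp_id in Hm; auto. Qed.

Lemma bound_lsum {I : Type} (l : list I) (P : I -> R -> Prop) :
  (forall i, exists C, forall t, P i t -> Rabs t <= C) ->
  exists C, 0 <= C /\ forall i t, In i l -> P i t -> Rabs t <= C.
Proof. intros H. induction l as [|a l IH].
  - exists 0. split; [lra|]. intros i t Hi; destruct Hi.
  - destruct IH as [C [HC0 HC]]. destruct (H a) as [Ca HCa].
    exists (Rmax C (Rabs Ca)). split. eapply Rle_trans; [exact HC0|apply Rmax_l].
    intros i t [Hi|Hi] HP.
    + subst. eapply Rle_trans; [apply HCa; auto|].
      eapply Rle_trans; [apply Rle_abs|apply Rmax_r].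
    + eapply Rle_trans; [apply (HC i t Hi HP)|apply Rmax_l]. Qed.

Lemma bound_fam {I : finite_type} (P : I -> R -> Prop) :
  (forall i, exists C, forall t, P i t -> Rabs t <= C) ->
  exists C, 0 <= C /\ forall i t, P i t -> Rabs t <= C.
Proof. intros H. destruct (bound_lsum (ft_enum I) P H) as [C [H0 H1]].
  exists C; split; auto. intros i t; apply H1. apply ft_full. Qed.

Lemma bound_mat {X : finite_type} a b (M : R -> X -> X -> R) :
  a <= b -> (forall x y, cont_on a b (fun t => M t x y)) ->
  exists C, 0 <= C /\ forall t x y, a <= t <= b -> Rabs (M t x y) <= C.
Proof. intros Hab HM.
  assert (H1 : forall x, exists C, 0 <= C /\ forall y t, (fun y v => exists t, a <= t <= b /\ v = M t x y) y t -> Rabs t <= C).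
  { intros x. apply bound_fam. intros y. destruct (bound_cont a b (fun t => M t x y)) as [C HC]; auto.
    exists C. intros v [t [Ht ->]]. auto. }
  destruct (bound_fam (fun x v => exists y t, a <= t <= b /\ v = M t x y)) as [C [HC0 HC]].
  { intros x. destruct (H1 x) as [C [HC0 HC]]. exists C. intros v [y [t [Ht ->]]].
    apply (HC y). exists t; auto. }
  exists C. split; auto. intros t x y Ht. apply (HC x). exists y, t; auto. Qed.

Definition lin_sol {X : finite_type} a b (M : R -> X -> X -> R) (p : R -> X -> R) :=
  (forall x, cont_on a b (fun t => p t x)) /\
  (forall t x, a < t < b -> is_derive (fun u => p u x) t (fsum (fun y => M t x y * p t y))).

Lemma lin_unique {X : finite_type} a b (M : R -> X -> X -> R) p q :
  a <= b -> (forall x y, cont_on a b (fun t => M t x y)) ->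
  (forall t x y, a <= t <= b -> x <> y -> 0 <= M t x y) ->
  lin_sol a b M p -> lin_sol a b M q -> (forall x, p a x = q a x) ->
  forall t x, a <= t <= b -> p t x = q t x.
Proof. intros Hab Hc Hoff [Hpc Hpd] [Hqc Hqd] H0 t x Ht.
  destruct (bound_mat a b M Hab Hc) as [C [HC0 HC]].
  assert (A : forall (s : R), forall t x, a <= t <= b -> 0 <= s * (p t x - q t x)).
  { intros sg. apply (metzler_pos a b M (fun t x => sg * (p t x - q t x)) C); auto.
    - intros z. apply cont_on_mult; auto. apply cont_on_const. apply cont_on_minus; auto.
    - intros s z Hs. specialize (Hpd s z Hs); specialize (Hqd s z Hs).
      pose proof (is_derive_minus _ _ _ _ _ Hpd Hqd) as D.
      pose proof (is_derive_scal (fun u => minus (p u z) (q u z)) s sg _ D) as D2.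
      simpl in D2. unfold scal, minus, plus, opp, mult in D2; simpl in D2. unfold mult in D2; simpl in D2.
      replace (fsum (fun y => M s z y * (sg * (p s y - q s y)))) with
        (sg * (fsum (fun y => M s z y * p s y) + - fsum (fun y => M s z y * q s y))).
      exact D2.
      rewrite <- fsum_opp, <- fsum_plus, <- fsum_scal. apply fsum_ext; intros; ring.
    - intros z. rewrite H0. lra. }
  pose proof (A 1 t x Ht); pose proof (A (-1) t x Ht). lra. Qed.


Ltac rfix := match goal with |- @eq _ ?a ?b => change (@eq R a b) end.

Lemma seq_rate (a e : nat -> R) :
  (forall n m, (n <= m)%nat -> Rabs (a m - a n) <= e n) -> is_lim_seq e 0 ->
  exists l : R, is_lim_seq a l /\ forall n, Rabs (l - a n) <= e n.
Proof.
  intros H He.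
  assert (Hc : ex_lim_seq_cauchy a).
  { intros eps. apply is_lim_seq_spec in He. assert (Hp : 0 < eps / 2) by (destruct eps; simpl; lra).
    destruct (He (mkposreal _ Hp)) as [N HN]. exists N. intros n m Hn Hm.
    specialize (HN N (Nat.le_refl N)). simpl in HN. rewrite Rminus_0_r in HN.
    pose proof (H N n Hn); pose proof (H N m Hm).
    pose proof (Rabs_triang (a n - a N) (a N - a m)).
    replace (a n - a N + (a N - a m)) with (a n - a m) in H2 by ring.
    rewrite Rabs_minus_sym in H1. unfold Rabs at 1 in HN. destruct Rcase_abs in HN.
    - pose proof (Rabs_pos (a n - a N)). lra.
    - destruct eps; simpl in *; lra. }
  apply ex_lim_seq_cauchy_corr in Hc. destruct Hc as [l Hl]. exists l. split; auto.
  intros n. destruct (Rle_dec (Rabs (l - a n)) (e n)) as [ok|ko]; auto. exfalso.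
  assert (Hd : 0 < Rabs (l - a n) - e n) by lra.
  apply is_lim_seq_spec in Hl. destruct (Hl (mkposreal _ Hd)) as [N HN].
  specialize (HN (max N n) (Nat.le_max_l _ _)). simpl in HN.
  specialize (H n (max N n) (Nat.le_max_r _ _)).
  pose proof (Rabs_triang (l - a (max N n)) (a (max N n) - a n)).
  replace (l - a (max N n) + (a (max N n) - a n)) with (l - a n) in H0 by ring.
  rewrite Rabs_minus_sym in HN. lra.
Qed.

Lemma RInt_exp_lin lam t : 0 < lam -> RInt (fun s => exp (lam * s)) 0 t = (exp (lam * t) - 1) / lam.
Proof. intros Hl.
  assert (forall a b, a <= b -> RInt (fun s => exp (lam * s)) a b = exp (lam * b) / lam - exp (lam * a) / lam).
  { intros a b Hab. apply (ftc_lemma a b (fun s => exp (lam * s)) (fun s => exp (lam * s) / lam)); auto.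
    - apply cont_on_exp; auto. apply cont_on_mult; auto. apply cont_on_const. apply cont_on_id; auto.
    - apply cont_on_mult; auto. apply cont_on_exp; auto. apply cont_on_mult; auto. apply cont_on_const.
      apply cont_on_id; auto. apply cont_on_const.
    - intros s _. auto_derive. all: try easy. rewrite Rmult_1_r, (Rmult_comm lam), Rmult_assoc, Rinv_r, Rmult_1_r; auto; lra. }
  destruct (Rle_dec 0 t).
  - rewrite H by auto. rewrite Rmult_0_r, exp_0. rfix. field. lra.
  - rewrite <- opp_RInt_swap. rewrite H by lra. rewrite Rmult_0_r, exp_0. unfold opp; simpl. rfix. field. lra.
    apply ex_RInt_cont_on. lra. apply cont_on_exp; try lra. apply cont_on_mult; try lra.
    apply cont_on_const. apply cont_on_id; lra.
Qed.

Lemma int_cont (f : R -> R) : (forall t, continuous f t) ->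
  (forall a b, ex_RInt f a b) /\ (forall a t, is_derive (fun s => RInt f a s) t (f t)) /\
  (forall a t, continuous (fun s => RInt f a s) t).
Proof. intros Hf.
  assert (E : forall a b, ex_RInt f a b) by (intros; apply (@ex_RInt_continuous R_CompleteNormedModule); auto).
  assert (D : forall a t, is_derive (fun s => RInt f a s) t (f t)).
  { intros a t. apply (is_derive_RInt f (fun s => RInt f a s) a t); auto.
    apply filter_forall. intros z. apply (RInt_correct (V := R_CompleteNormedModule)). auto. }
  split; auto. split; auto. intros a t.
  apply (@ex_derive_continuous R_AbsRing R_NormedModule (fun s => RInt f a s) t). eexists; apply D.
Qed.


Fixpoint pit {X : finite_type} (Bc : R -> X -> X -> R) (c : R -> R) (u0 : X -> R) (n : nat) : R -> X -> R :=
  match n with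
  | O => fun _ x => u0 x
  | S n => fun t x => u0 x + RInt (fun s => fsum (fun y => Bc s x y * pit Bc c u0 n (c s) y)) 0 t
  end.

Lemma clamp_clamp a b t : a <= b -> clamp a b (clamp a b t) = clamp a b t.
Proof. intros; apply clamp_id, clamp_in; auto. Qed.

Lemma RInt_abs_bound (f : R -> R) a b K : a <= b -> ex_RInt f a b ->
  ex_RInt K a b -> (forall s, a <= s <= b -> Rabs (f s) <= K s) ->
  Rabs (RInt f a b) <= RInt K a b.
Proof. intros Hab Hf HK H.
  destruct (Rle_lt_or_eq_dec a b Hab) as [Hlt|Heq].
  - assert (Hab' : forall x, a < x < b -> - K x <= f x <= K x).
    { intros x Hx. specialize (H x ltac:(lra)). unfold Rabs in H; destruct Rcase_abs in H; lra. }
    assert (L1 : RInt f a b <= RInt K a b) by (apply RInt_le; auto; intros x Hx; apply Hab'; auto).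
    assert (L2 : RInt (fun x => - K x) a b <= RInt f a b).
    { apply RInt_le; auto. apply (ex_RInt_opp K). auto. intros x Hx; apply Hab'; auto. }
    rewrite (RInt_opp K) in L2 by auto. unfold opp in L2; simpl in L2.
    unfold Rabs; destruct Rcase_abs; lra.
  - subst. rewrite !RInt_point. unfold zero; simpl. rewrite Rabs_R0; lra.
Qed.

Lemma fsum_mat_bound {X : finite_type} (b v : X -> R) M :
  (forall y, Rabs (b y) <= M) -> Rabs (fsum (fun y => b y * v y)) <= M * fsum (fun y => Rabs (v y)).
Proof. intros H. eapply Rle_trans; [apply fsum_abs|]. rewrite <- fsum_scal. apply fsum_le.
  intros y. rewrite Rabs_mult. apply Rmult_le_compat_r. apply Rabs_pos. auto. Qed.

Lemma fsum_bound_const {X : finite_type} (v : X -> R) K :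
  (forall y, Rabs (v y) <= K) -> fsum (fun y => Rabs (v y)) <= K * fsum (fun _ : X => 1).
Proof. intros H. rewrite <- fsum_const. apply fsum_le; auto. Qed.


Lemma aux1 a b : a + b - a = b. Proof. ring. Qed.
Lemma aux2 a b c : a + b - (a + c) = b - c. Proof. ring. Qed.

Lemma picard {X : finite_type} L (B : R -> X -> X -> R) (u0 : X -> R) :
  0 <= L -> (forall x y, cont_on 0 L (fun t => B t x y)) ->
  exists u : R -> X -> R, (forall x, u 0 x = u0 x) /\
    (forall x, cont_on 0 L (fun t => u t x)) /\
    (forall t x, 0 < t < L -> is_derive (fun s => u s x) t (fsum (fun y => B t x y * u t y))).
Proof.
  intros HL HB.
  set (c := clamp 0 L).
  set (Bc := fun s x y => B (c s) x y).
  assert (Hcc : forall t, continuous c t) by (intros; apply continuous_clamp; auto).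
  assert (Hcin : forall t, 0 <= c t <= L) by (intros; apply clamp_in; auto).
  assert (Hcid : forall t, 0 <= t <= L -> c t = t) by (intros; apply clamp_id; auto).
  assert (HBc : forall x y s, continuous (fun s => Bc s x y) s).
  { intros x y s. apply (cont_on_ext 0 L (fun t => B t x y)); auto. }
  destruct (bound_mat 0 L B HL HB) as [M [HM0 HM]].
  assert (HBM : forall s x y, Rabs (Bc s x y) <= M) by (intros; apply HM; auto).
  set (N := fsum (fun _ : X => 1)).
  assert (HN : 0 <= N) by apply fsum_card_nonneg.
  set (U := pit Bc c u0).
  set (W := fun n s x => fsum (fun y => Bc s x y * U n (c s) y)).
  assert (HU : forall n, U (S n) = fun t x => u0 x + RInt (fun s => W n s x) 0 t) by reflexivity.
  assert (CWU : forall n, (forall x t, continuous (fun s => U n s x) t) -> forall x t, continuous (fun s => W n s x) t).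
  { intros n Hn x t. unfold W. apply continuous_fsum. intros y.
    apply (continuous_mult (fun s => Bc s x y) (fun s => U n (c s) y)). apply HBc.
    apply (continuous_comp c (fun s => U n s y)); auto. }
  assert (CU : forall n x t, continuous (fun s => U n s x) t).
  { induction n; intros x t.
    - simpl. apply continuous_const.
    - rewrite HU. apply (continuous_plus (fun _ => u0 x) (fun s => RInt (fun s0 => W n s0 x) 0 s)).
      apply continuous_const. apply int_cont. intros; apply CWU; auto. }
  assert (CW : forall n x t, continuous (fun s => W n s x) t) by (intros; apply CWU; auto).
  assert (EW : forall n x a b, ex_RInt (fun s => W n s x) a b) by (intros; apply int_cont; auto).
  set (m0 := fsum (fun y => Rabs (u0 y))).
  assert (Hm0 : 0 <= m0) by (apply fsum_nonneg; intros; apply Rabs_pos).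
  set (A := L * M * m0).
  assert (HA : 0 <= A) by (unfold A; repeat apply Rmult_le_pos; auto).
  set (lam := 2 * N * M + 1).
  assert (Hlam : 0 < lam) by (unfold lam; nra).
  assert (D : forall n x t, 0 <= t <= L -> Rabs (U (S n) t x - U n t x) <= A * exp (lam * t) * (/2)^n).
  { induction n; intros x t Ht.
    - rewrite HU. change (U 0%nat t x) with (u0 x). rewrite aux1.
      eapply Rle_trans. apply (RInt_abs_bound _ 0 t (fun _ => M * m0)); auto; try lra.
      apply ex_RInt_const.
      intros s Hs. unfold W. simpl. apply fsum_mat_bound. auto.
      rewrite RInt_const. unfold scal; simpl; unfold mult; simpl.
      assert (1 <= exp (lam * t)). { pose proof (exp_ineq1_le (lam * t)). nra. }
      assert ((t - 0) * (M * m0) <= A). { unfold A. assert (0 <= M * m0) by nra. nra. }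
      simpl. nra.
    - rewrite (HU (S n)), (HU n).
      rewrite aux2.
      assert (E : RInt (fun s => W (S n) s x) 0 t - RInt (fun s => W n s x) 0 t =
                  RInt (fun s => W (S n) s x - W n s x) 0 t).
      { symmetry. apply (RInt_minus (V := R_CompleteNormedModule)); auto. }
      rewrite E. clear E.
      set (k := N * M * A * (/2)^n).
      eapply Rle_trans. apply (RInt_abs_bound _ 0 t (fun s => k * exp (lam * s))); auto; try lra.
      + apply (ex_RInt_minus (V := R_CompleteNormedModule)); auto.
      + apply ex_RInt_cont_on; try lra. apply cont_on_mult; try lra. apply cont_on_const.
        apply cont_on_exp; try lra. apply cont_on_mult; try lra. apply cont_on_const. apply cont_on_id; lra.
      + intros s Hs. unfold W.
        rewrite <- fsum_minus.
        rewrite (fsum_ext _ (fun y => Bc s x y * (U (S n) (c s) y - U n (c s) y))) by (intros; ring).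
        eapply Rle_trans. apply fsum_mat_bound. auto.
        rewrite Hcid by lra.
        eapply Rle_trans. apply Rmult_le_compat_l. auto.
        apply (fsum_bound_const (fun y => U (S n) s y - U n s y) (A * exp (lam * s) * (/2)^n)).
        intros y. apply IHn. lra.
        fold N. unfold k. right. ring.
      + rewrite (RInt_scal (V := R_CompleteNormedModule) (fun s => exp (lam * s))).
        unfold scal; simpl; unfold mult; simpl. rewrite RInt_exp_lin by auto.
        unfold k. simpl.
        assert (P1 : 0 <= A * (/2)^n). { apply Rmult_le_pos; auto. apply pow_le; lra. }
        assert (P2 : 0 < exp (lam * t)) by apply exp_pos.
        assert (P3 : N * M / lam <= /2).
        { unfold Rdiv. apply Rmult_le_reg_r with lam; [lra|].
          rewrite Rmult_assoc, Rinv_l, Rmult_1_r by lra. unfold lam. nra. }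
        assert (P4 : N * M * A * (/2)^n * ((exp (lam * t) - 1) / lam) = (N * M / lam) * (A * (/2)^n) * (exp (lam * t) - 1)) by (field; lra).
        rewrite P4.
        assert (P5 : (N * M / lam) * (A * (/2)^n) * (exp (lam * t) - 1) <= (/2) * (A * (/2)^n) * exp (lam * t)).
        { assert (0 <= N * M / lam). { apply Rmult_le_pos. nra. left; apply Rinv_0_lt_compat; lra. }
          apply Rle_trans with ((N * M / lam) * (A * (/2)^n) * exp (lam * t)). nra.
          apply Rmult_le_compat_r. lra. apply Rmult_le_compat_r; lra. }
        lra.
      + apply ex_RInt_cont_on; try lra. apply cont_on_exp; try lra. apply cont_on_mult; try lra. apply cont_on_const. apply cont_on_id; lra. }
  set (E := exp (lam * L)).
  assert (HE : 0 < E) by apply exp_pos.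
  assert (D2 : forall n k x t, 0 <= t <= L -> Rabs (U (n + k)%nat t x - U n t x) <= 2 * A * E * ((/2)^n - (/2)^(n+k))).
  { intros n k x t Ht. induction k.
    - rewrite Nat.add_0_r, Rminus_diag, Rabs_R0. lra.
    - replace (U (n + S k)%nat t x - U n t x) with ((U (S (n + k)) t x - U (n + k)%nat t x) + (U (n + k)%nat t x - U n t x))
        by (rewrite Nat.add_succ_r; ring).
      eapply Rle_trans. apply Rabs_triang.
      assert (Q : A * exp (lam * t) * (/2)^(n+k) <= A * E * (/2)^(n+k)).
      { apply Rmult_le_compat_r. apply pow_le; lra. apply Rmult_le_compat_l; auto.
        unfold E. destruct (Rle_lt_or_eq_dec t L) as [h|h]; try lra.
        left; apply exp_increasing; nra. subst; lra. }
      pose proof (D (n + k)%nat x t Ht).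
      rewrite Nat.add_succ_r. simpl pow. lra. }
  set (e := fun n => 2 * A * E * (/2)^n).
  assert (He : is_lim_seq e 0).
  { unfold e. replace (Finite 0) with (Rbar_mult (2 * A * E) 0) by (simpl; f_equal; ring).
    apply is_lim_seq_scal_l. apply is_lim_seq_geom. rewrite Rabs_pos_eq; lra. }
  assert (D3 : forall n m x t, (n <= m)%nat -> 0 <= t <= L -> Rabs (U m t x - U n t x) <= e n).
  { intros n m x t Hnm Ht. replace m with (n + (m - n))%nat by lia.
    eapply Rle_trans. apply D2; auto. unfold e.
    assert (0 <= (/2)^(n + (m - n))) by (apply pow_le; lra).
    assert (0 <= 2 * A * E) by (repeat apply Rmult_le_pos; lra). nra. }
  set (u := fun t x => real (Lim_seq (fun n => U n (c t) x))).
  assert (UL : forall t x, is_lim_seq (fun n => U n (c t) x) (u t x) /\ forall n, Rabs (u t x - U n (c t) x) <= e n).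
  { intros t x. destruct (seq_rate (fun n => U n (c t) x) e) as [l [Hl Hb]].
    { intros n m Hnm. apply D3; auto. } { auto. }
    unfold u. rewrite (is_lim_seq_unique _ _ Hl). simpl. split; [exact Hl|exact Hb]. }
  set (Wi := fun s x => fsum (fun y => Bc s x y * u s y)).
  assert (WB : forall n s x, Rabs (W n s x - Wi s x) <= M * (N * e n)).
  { intros n s x. unfold W, Wi. rewrite <- fsum_minus.
    rewrite (fsum_ext _ (fun y => Bc s x y * (U n (c s) y - u s y))) by (intros; ring).
    eapply Rle_trans. apply fsum_mat_bound; auto. apply Rmult_le_compat_l; auto.
    eapply Rle_trans. apply fsum_bound_const with (K := e n). intros y.
    rewrite Rabs_minus_sym. apply (UL s y). fold N. right; ring. }
  assert (HeN : is_lim_seq (fun n => M * (N * e n)) 0).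
  { replace (Finite 0) with (Rbar_mult M (Rbar_mult N 0)) by (simpl; f_equal; ring).
    apply is_lim_seq_scal_l, is_lim_seq_scal_l. auto. }
  assert (IL : forall x t, exists If, is_RInt (fun s => Wi s x) 0 t If /\ is_lim_seq (fun n => RInt (fun s => W n s x) 0 t) If).
  { intros x t.
    destruct (filterlim_RInt (V := R_CompleteNormedModule) (fun n s => W n s x) 0 t eventually eventually_filter
               (fun s => Wi s x) (fun n => RInt (fun s => W n s x) 0 t)) as [If [H1 H2]].
    - intros n. apply (RInt_correct (V := R_CompleteNormedModule)). auto.
    - apply filterlim_locally. intros eps.
      apply is_lim_seq_spec in HeN. destruct (HeN eps) as [N0 HN0].
      exists N0. intros n Hn. specialize (HN0 n Hn). intros s.
      unfold ball; simpl. unfold AbsRing_ball, abs, minus, plus, opp; simpl.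
      rewrite Rminus_0_r in HN0. eapply Rle_lt_trans; [|exact HN0].
      eapply Rle_trans. apply (WB n s x). apply Rle_abs.
    - exists If. split; auto. }
  assert (IE : forall t x, 0 <= t <= L -> u t x = u0 x + RInt (fun s => Wi s x) 0 t).
  { intros t x Ht. destruct (IL x t) as [If [H1 H2]].
    rewrite (is_RInt_unique _ _ _ _ H1).
    pose proof (proj1 (UL t x)) as H3. apply is_lim_seq_incr_1 in H3.
    assert (H4 : is_lim_seq (fun n => U (S n) (c t) x) (u0 x + If)).
    { eapply is_lim_seq_ext. 2: apply is_lim_seq_plus'. 2: apply is_lim_seq_const. 2: exact H2.
      intros n. rewrite HU. rewrite Hcid; auto. }
    pose proof (is_lim_seq_unique _ _ H3). pose proof (is_lim_seq_unique _ _ H4).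
    rewrite H in H0. injection H0. auto. }
  assert (RIc : forall x t, is_RInt (fun s => Wi s x) 0 t (RInt (fun s => Wi s x) 0 t)).
  { intros x t. destruct (IL x t) as [If [H1 _]]. rewrite (is_RInt_unique _ _ _ _ H1). auto. }
  assert (Phic : forall x t, continuous (fun t => RInt (fun s => Wi s x) 0 t) t).
  { intros x t. apply (continuous_RInt_1 (fun s => Wi s x) 0 t). apply filter_forall. intros; apply RIc. }
  assert (Uc : forall x s, u s x = u0 x + RInt (fun s => Wi s x) 0 (c s)).
  { intros x s. rewrite <- IE by auto. unfold u. unfold c at 2. rewrite clamp_clamp; auto. }
  assert (Ucont : forall x t, continuous (fun s => u s x) t).
  { intros x t. apply continuous_ext with (f := fun s => u0 x + RInt (fun s => Wi s x) 0 (c s)).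
    intros; symmetry; apply Uc.
    apply (continuous_plus (fun _ => u0 x) (fun s => RInt (fun s => Wi s x) 0 (c s))).
    apply continuous_const. apply (continuous_comp c (fun t => RInt (fun s => Wi s x) 0 t)); auto. }
  assert (Wc : forall x t, continuous (fun s => Wi s x) t).
  { intros x t. unfold Wi. apply continuous_fsum. intros y.
    apply (continuous_mult (fun s => Bc s x y) (fun s => u s y)); auto. }
  exists u. split; [|split].
  - intros x. rewrite Uc. replace (c 0) with 0 by (rewrite Hcid; lra). rewrite RInt_point. unfold zero; simpl. ring.
  - intros x. apply cont_on_of_cont with (g := fun s => u s x); auto.
  - intros t x Ht.
    apply is_derive_ext_loc with (f := fun s => u0 x + RInt (fun s => Wi s x) 0 s).
    + assert (Hp : 0 < Rmin t (L - t)) by (apply Rmin_pos; lra).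
      exists (mkposreal _ Hp). intros s Hs. unfold ball in Hs; simpl in Hs.
      unfold AbsRing_ball, abs, minus, plus, opp in Hs; simpl in Hs.
      pose proof (Rmin_l t (L - t)); pose proof (Rmin_r t (L - t)).
      rewrite Uc. rewrite Hcid; auto. unfold Rabs in Hs; destruct Rcase_abs in Hs; lra.
    + replace (fsum (fun y => B t x y * u t y)) with (0 + Wi t x).
      apply (is_derive_plus (fun _ => u0 x) (fun s => RInt (fun s => Wi s x) 0 s)).
      apply (is_derive_const (u0 x)).
      apply (is_derive_RInt (fun s => Wi s x) (fun s => RInt (fun s => Wi s x) 0 s) 0 t).
      apply filter_forall; intros; apply RIc. auto.
      unfold Wi, Bc. rewrite Hcid by lra. ring.
Qed.


Lemma cont_on_reflect T f : 0 <= T -> cont_on 0 T f -> cont_on 0 T (fun t => f (T - t)).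
Proof. intros HT Hf.
  apply cont_on_of_cont with (g := fun t => f (clamp 0 T (T - t))).
  - intros t Ht. rewrite clamp_id; auto; lra.
  - intros t _. apply (continuous_comp (fun t => T - t) (fun s => f (clamp 0 T s))).
    apply (continuous_minus (fun _ => T) (fun t => t)). apply continuous_const. apply continuous_id.
    apply cont_on_ext; auto. Qed.

Lemma pos_strict {X : finite_type} a b (M : R -> X -> X -> R) (p : R -> X -> R) C :
  a <= b -> 0 <= C ->
  (forall t x y, a <= t <= b -> Rabs (M t x y) <= C) ->
  (forall t x y, a <= t <= b -> x <> y -> 0 <= M t x y) ->
  lin_sol a b M p -> (forall t x, a <= t <= b -> 0 <= p t x) ->
  forall x, 0 < p a x -> forall t, a <= t <= b -> 0 < p t x.
Proof. intros Hab HC HM Hoff [Hc Hd] Hpos x H0 t Ht.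
  set (f := fun s => - (exp (C * s) * p s x)).
  assert (Hm : f t <= f a).
  { apply (mono_lemma a t f (fun s => - (C * exp (C * s) * p s x + exp (C * s) * fsum (fun y => M s x y * p s y)))).
    - lra.
    - unfold f. apply cont_on_opp. lra. apply cont_on_mult. lra.
      apply cont_on_exp. lra. apply cont_on_mult. lra. apply cont_on_const. apply cont_on_id. lra.
      apply (cont_on_sub a b); auto; lra.
    - intros s Hs. unfold f.
      apply (is_derive_opp (fun s => exp (C * s) * p s x)).
      apply (is_derive_mult (fun s => exp (C * s)) (fun s => p s x)).
      auto_derive; auto. rewrite Rmult_1_r. reflexivity. apply Hd. lra. intros; apply Rmult_comm.
    - intros s Hs. assert (Hs' : a <= s <= b) by lra.
      rewrite (fsum_split x). 
      assert (O : 0 <= offdiag_sum x (fun y => M s x y * p s y)).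
      { apply offdiag_nonneg. intros y Hy. apply Rmult_le_pos. apply Hoff; auto. apply Hpos; auto. }
      pose proof (abs_le_inv _ _ (HM s x x Hs')). pose proof (Hpos s x Hs').
      pose proof (exp_pos (C * s)).
      assert (0 <= (C + M s x x) * p s x) by (apply Rmult_le_pos; lra).
      assert (0 <= exp (C * s) * ((C + M s x x) * p s x + offdiag_sum x (fun y => M s x y * p s y))).
      { apply Rmult_le_pos; lra. }
      nra. }
  unfold f in Hm. pose proof (exp_pos (C * t)). pose proof (exp_pos (C * a)).
  assert (0 < exp (C * a) * p a x) by (apply Rmult_lt_0_compat; lra).
  assert (0 < exp (C * t) * p t x) by lra.
  destruct (Rle_dec (p t x) 0) as [h|h]; [|lra]. exfalso. nra. Qed.

Lemma backward_exists {X : finite_type} T (Q : R -> X -> X -> R) (phi : X -> R) :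
  0 <= T -> regular_generator T Q -> (forall x, 0 < phi x) ->
  exists h : R -> X -> R,
    (forall x, h T x = phi x) /\
    (forall x, cont_on 0 T (fun t => h t x)) /\
    (forall t x, 0 < t < T -> is_derive (fun s => h s x) t (- fsum (fun y => Q t x y * h t y))) /\
    (forall t x, 0 <= t <= T -> 0 < h t x).
Proof.
  intros HT [[Hoff Hdiag] HQc] Hphi.
  set (B := fun s x y => Q (T - s) x y).
  assert (HBc : forall x y, cont_on 0 T (fun s => B s x y)).
  { intros x y. unfold B. apply (cont_on_reflect T (fun t => Q t x y)); auto. }
  destruct (picard T B phi HT HBc) as [u [Hu0 [Huc Hud]]].
  assert (Hsol : lin_sol 0 T B u) by (split; auto).
  destruct (bound_mat 0 T B HT HBc) as [C [HC0 HC]].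
  assert (HBoff : forall t x y, 0 <= t <= T -> x <> y -> 0 <= B t x y).
  { intros; unfold B; apply Hoff; auto. }
  assert (Hpos : forall t x, 0 <= t <= T -> 0 <= u t x).
  { intros t x Ht. apply (metzler_pos 0 T B u C); auto. intros z; rewrite Hu0; left; auto. }
  exists (fun t x => u (T - t) x). split; [|split; [|split]].
  - intros x. replace (T - T) with 0 by ring. auto.
  - intros x. apply (cont_on_reflect T (fun t => u t x)); auto.
  - intros t x Ht.
    assert (D := Hud (T - t) x ltac:(lra)).
    pose proof (is_derive_comp (fun s => u s x) (fun s => T - s) t _ (-1) D) as D2.
    replace (- fsum (fun y => Q t x y * u (T - t) y)) with (scal (-1) (fsum (fun y => B (T - t) x y * u (T - t) y))).
    apply D2. auto_derive; auto.
    unfold scal; simpl; unfold mult; simpl. unfold B. replace (T - (T - t)) with t by ring. rfix. ring.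
  - intros t x Ht. apply (pos_strict 0 T B u C); auto. rewrite Hu0; auto. lra.
Qed.


Definition Hc {X : finite_type} (T : R) (h : R -> X -> R) (t : R) (x : X) := h (clamp 0 T t) x.

Definition Qhf {X : finite_type} T (Qpre : R -> X -> X -> R) (h : R -> X -> R) (t : R) (x y : X) :=
  if ft_eq_dec X y x then - offdiag_sum x (fun z => Qpre t x z * Hc T h t z / Hc T h t x)
  else Qpre t x y * Hc T h t y / Hc T h t x.

Definition Dkl {X : finite_type} T Qpre h (Q : R -> X -> X -> R) (t : R) (x : X) :=
  offdiag_sum x (fun y => Qhf T Qpre h t x y - Q t x y + xlogxy (Q t x y) (Qhf T Qpre h t x y)).

Lemma Qhf_off {X : finite_type} T Qpre h t (x y : X) : y <> x ->
  Qhf T Qpre h t x y = Qpre t x y * Hc T h t y / Hc T h t x.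
Proof. intros; unfold Qhf; destruct (ft_eq_dec X y x); congruence. Qed.

Lemma xlogxy_same a : xlogxy a a = 0.
Proof. unfold xlogxy. destruct (Req_EM_T a 0); auto. unfold Rdiv. rewrite Rinv_r by auto.
  rewrite ln_1. ring. Qed.

Lemma Dkl_self {X : finite_type} T Qpre h t (x : X) : Dkl T Qpre h (Qhf T Qpre h) t x = 0.
Proof. unfold Dkl. rewrite <- (offdiag_zero x). apply offdiag_ext. intros y _.
  rewrite xlogxy_same. ring. Qed.

Lemma kl_decomp {X : finite_type} T Qpre h (Q : R -> X -> X -> R) t (x : X) :
  (forall y, y <> x -> 0 <= Q t x y) ->
  (forall y, y <> x -> 0 <= Qpre t x y) ->
  (forall y, y <> x -> Qpre t x y = 0 -> Q t x y = 0) ->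
  (forall y, 0 < Hc T h t y) ->
  kl_rate Qpre Q t x = Dkl T Qpre h Q t x +
    offdiag_sum x (fun y => Q t x y * (ln (Hc T h t y) - ln (Hc T h t x)) + Qpre t x y - Qhf T Qpre h t x y).
Proof. intros HQ HQp Hac HH. unfold kl_rate, Dkl. rewrite <- offdiag_plus. apply offdiag_ext.
  intros y Hy. rewrite Qhf_off by auto.
  assert (E : xlogxy (Q t x y) (Qpre t x y) = xlogxy (Q t x y) (Qpre t x y * Hc T h t y / Hc T h t x)
           + Q t x y * (ln (Hc T h t y) - ln (Hc T h t x))).
  { unfold xlogxy. destruct (Req_EM_T (Q t x y) 0) as [e|n]. rewrite e; ring.
    assert (Hq : 0 < Q t x y) by (destruct (HQ y Hy); auto; congruence).
    assert (Hp : 0 < Qpre t x y).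
    { destruct (HQp y Hy) as [p|p]; auto. exfalso. apply n. apply Hac; auto. }
    pose proof (HH x); pose proof (HH y).
    rewrite !ln_div; try (apply Rdiv_lt_0_compat; auto); try apply Rmult_lt_0_compat; auto.
    rewrite ln_mult by auto. ring. }
  rewrite E. ring. Qed.


Lemma diag_gen {X : finite_type} (Q : R -> X -> X -> R) t (x : X) (f : X -> R) :
  is_generator Q ->
  fsum (fun y => Q t x y * f y) = offdiag_sum x (fun y => Q t x y * (f y - f x)).
Proof. intros [_ Hd]. rewrite (fsum_split x). rewrite Hd.
  rewrite (offdiag_ext x (fun y => Q t x y * (f y - f x)) (fun y => Q t x y * f y - f x * Q t x y)) by (intros; ring).
  rewrite offdiag_minus, offdiag_scal. ring. Qed.

Lemma fwd_generic {X : finite_type} (Q : R -> X -> X -> R) t (x : X) (p : X -> R) :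
  is_generator Q ->
  offdiag_sum x (fun y => Q t y x * p y) - offdiag_sum x (fun y => Q t x y) * p x =
  fsum (fun y => Q t y x * p y).
Proof. intros [_ Hd]. rewrite (fsum_split x). rewrite Hd. change (fun y => Q t x y) with (Q t x). ring. Qed.

Lemma kf_lin {X : finite_type} (Q : R -> X -> X -> R) s T p0 p :
  is_generator Q -> kolmogorov_forward Q s T p0 p ->
  lin_sol s T (fun t x y => Q t y x) p.
Proof. intros HG [_ [Hc Hd]]. split; auto. intros t x Ht.
  rewrite <- fwd_generic by auto. apply Hd; auto. Qed.

Lemma lin_kf {X : finite_type} (Q : R -> X -> X -> R) s T p0 p :
  is_generator Q -> (forall x, p s x = p0 x) -> lin_sol s T (fun t x y => Q t y x) p ->
  kolmogorov_forward Q s T p0 p.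
Proof. intros HG H0 [Hc Hd]. split; auto. split; auto. intros t x Ht.
  rewrite fwd_generic by auto. apply Hd; auto. Qed.


Lemma is_derive_ln_comp (f : R -> R) t df : 0 < f t -> is_derive f t df ->
  is_derive (fun s => ln (f s)) t (df * / f t).
Proof. intros Hp Hd.
  assert (Hl : is_derive ln (f t) (/ f t)) by (apply is_derive_Reals, derivable_pt_lim_ln; auto).
  pose proof (is_derive_comp ln f t _ _ Hl Hd). exact H. Qed.

Definition PDf {X : finite_type} T Qpre h (Q : R -> X -> X -> R) (p : R -> X -> R) t :=
  fsum (fun x => p t x * Dkl T Qpre h Q t x).

Lemma ident {X : finite_type} T alpha (r : X -> R) (Qpre Q : R -> X -> X -> R) (h : R -> X -> R)
  s (p0 : X -> R) (p : R -> X -> R) :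
  0 <= s <= T -> 0 < alpha -> regular_generator T Qpre ->
  (forall x, h T x = exp (r x / alpha)) ->
  (forall x, cont_on 0 T (fun t => h t x)) ->
  (forall t x, 0 < t < T -> is_derive (fun s => h s x) t (- fsum (fun y => Qpre t x y * h t y))) ->
  (forall t x, 0 <= t <= T -> 0 < h t x) ->
  is_generator Q -> (forall x y, cont_on 0 T (fun t => Q t x y)) ->
  (forall t x y, 0 <= t <= T -> x <> y -> Qpre t x y = 0 -> Q t x y = 0) ->
  kolmogorov_forward Q s T p0 p -> ex_RInt (exp_kl Qpre Q p) s T ->
  ex_RInt (PDf T Qpre h Q p) s T /\
  fsum (fun x => p T x * r x) - alpha * RInt (exp_kl Qpre Q p) s T =
  alpha * fsum (fun x => p0 x * ln (h s x)) - alpha * RInt (PDf T Qpre h Q p) s T.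
Proof.
  intros Hs Ha [HQpg HQpc] hT hc hd hp HQg HQc Hac Hkf Hex.
  assert (HsT : s <= T) by lra.
  pose proof (kf_lin Q s T p0 p HQg Hkf) as [Hpc Hpd].
  destruct Hkf as [Hp0 _].
  set (gf := fun t => fsum (fun x => fsum (fun y => Q t y x * p t y) * ln (h t x)
        + p t x * (- fsum (fun y => Qpre t x y * h t y) * / h t x))).
  set (G := fun t => fsum (fun x => p t x * ln (h t x))).
  assert (Hsub : forall f, cont_on 0 T f -> cont_on s T f) by (intros; apply (cont_on_sub 0 T); auto; lra).
  assert (Hlnc : forall x, cont_on s T (fun t => ln (h t x))).
  { intros x. apply cont_on_ln; auto. intros t Ht; apply hp; lra. }
  assert (Hgc : cont_on s T gf).
  { unfold gf. apply cont_on_fsum; auto. intros x. apply cont_on_plus; auto.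
    - apply cont_on_mult; auto. apply cont_on_fsum; auto. intros y. apply cont_on_mult; auto.
    - apply cont_on_mult; auto. apply cont_on_mult; auto. apply cont_on_opp; auto.
      apply cont_on_fsum; auto. intros y. apply cont_on_mult; auto.
      apply cont_on_inv; auto. intros t Ht. assert (0 < h t x) by (apply hp; lra). lra. }
  assert (HGc : cont_on s T G).
  { unfold G. apply cont_on_fsum; auto. intros x. apply cont_on_mult; auto. }
  assert (HGd : forall t, s < t < T -> is_derive G t (gf t)).
  { intros t Ht. unfold G, gf. apply is_derive_fsum. intros x.
    apply (is_derive_mult (fun u => p u x) (fun u => ln (h u x))).
    - apply Hpd; auto.
    - apply is_derive_ln_comp. apply hp; lra. apply hd; lra.
    - intros; apply Rmult_comm. }
  assert (FTC : RInt gf s T = G T - G s) by (apply ftc_lemma; auto).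
  assert (PW : forall t, s <= t <= T -> exp_kl Qpre Q p t = PDf T Qpre h Q p t + gf t).
  { intros t Ht. assert (Ht0 : 0 <= t <= T) by lra.
    assert (HH : forall y, Hc T h t y = h t y) by (intros; unfold Hc; rewrite clamp_id; auto).
    assert (Hh : forall y, 0 < h t y) by auto.
    set (O := fun x => offdiag_sum x (fun y => Q t x y * (ln (h t y) - ln (h t x)) + Qpre t x y - Qpre t x y * h t y / h t x)).
    assert (E1 : exp_kl Qpre Q p t = PDf T Qpre h Q p t + fsum (fun x => p t x * O x)).
    { unfold exp_kl, PDf. rewrite <- fsum_plus. apply fsum_ext. intros x.
      rewrite (kl_decomp T Qpre h Q t x).
      - unfold O. rewrite Rmult_plus_distr_l. f_equal. f_equal. apply offdiag_ext. intros y Hy.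
        rewrite Qhf_off, !HH by auto. reflexivity.
      - intros y Hy. apply (proj1 HQg); auto.
      - intros y Hy. apply (proj1 HQpg); auto.
      - intros y Hy. apply Hac; auto.
      - intros y. rewrite HH; auto. }
    rewrite E1. f_equal. unfold gf. rewrite fsum_plus.
    assert (E2 : fsum (fun x => fsum (fun y => Q t y x * p t y) * ln (h t x)) =
                 fsum (fun x => p t x * offdiag_sum x (fun y => Q t x y * (ln (h t y) - ln (h t x))))).
    { rewrite (fsum_ext _ (fun x => fsum (fun y => Q t y x * p t y * ln (h t x)))).
      2: { intros x. rewrite Rmult_comm, <- fsum_scal. apply fsum_ext; intros; ring. }
      rewrite fsum_swap. apply fsum_ext. intros x.
      rewrite <- (diag_gen Q t x (fun y => ln (h t y))) by auto.
      rewrite <- fsum_scal. apply fsum_ext; intros; ring. }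
    assert (E3 : forall x, p t x * (- fsum (fun y => Qpre t x y * h t y) * / h t x) =
                 p t x * offdiag_sum x (fun y => Qpre t x y - Qpre t x y * h t y / h t x)).
    { intros x. rewrite (diag_gen Qpre t x (fun y => h t y)) by auto. f_equal.
      rewrite (offdiag_ext x (fun y => Qpre t x y - Qpre t x y * h t y / h t x) (fun y => (- / h t x) * (Qpre t x y * (h t y - h t x)))).
      - rewrite offdiag_scal. cbv beta. ring.
      - intros y Hy. field. specialize (Hh x). lra. }
    rewrite E2, (fsum_ext _ _ E3), <- fsum_plus. apply fsum_ext. intros x.
    unfold O. rewrite <- Rmult_plus_distr_l, <- offdiag_plus. f_equal. apply offdiag_ext.
    intros; ring. }
  assert (Hgi : ex_RInt gf s T) by (apply ex_RInt_cont_on; auto).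
  assert (EPD : forall t, s <= t <= T -> PDf T Qpre h Q p t = exp_kl Qpre Q p t - gf t).
  { intros t Ht. rewrite PW; auto. ring. }
  assert (Hpdi : ex_RInt (PDf T Qpre h Q p) s T).
  { apply ex_RInt_ext with (f := fun t => minus (exp_kl Qpre Q p t) (gf t)).
    - intros t Ht. rewrite Rmin_left, Rmax_right in Ht by lra. rewrite EPD by lra. reflexivity.
    - apply (ex_RInt_minus (V := R_CompleteNormedModule)); auto. }
  split; auto.
  assert (RI : RInt (PDf T Qpre h Q p) s T = RInt (exp_kl Qpre Q p) s T - RInt gf s T).
  { rewrite (RInt_ext (PDf T Qpre h Q p) (fun t => minus (exp_kl Qpre Q p t) (gf t))).
    - rewrite (RInt_minus (V := R_CompleteNormedModule)); auto.
    - intros t Ht. rewrite Rmin_left, Rmax_right in Ht by lra. rewrite EPD by lra. reflexivity. }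
  rewrite RI, FTC. unfold G.
  rewrite (fsum_ext (fun x => p T x * ln (h T x)) (fun x => / alpha * (p T x * r x))).
  2: { intros x. rewrite hT, ln_exp. field. lra. }
  rewrite fsum_scal.
  rewrite (fsum_ext (fun x => p s x * ln (h s x)) (fun x => p0 x * ln (h s x))) by (intros; rewrite Hp0; auto).
  field. lra.
Qed.


Lemma RInt_nonneg a b f : a <= b -> ex_RInt f a b -> (forall t, a <= t <= b -> 0 <= f t) -> 0 <= RInt f a b.
Proof. intros Hab Hf H.
  assert (RInt (fun _ => 0) a b <= RInt f a b).
  { apply RInt_le; auto. apply ex_RInt_const. intros; apply H; lra. }
  rewrite RInt_const in H0. unfold scal in H0; simpl in H0; unfold mult in H0; simpl in H0.
  rewrite Rmult_0_r in H0. auto. Qed.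

Lemma int_pos a b f t0 : a < b -> cont_on a b f -> (forall t, a <= t <= b -> 0 <= f t) ->
  a <= t0 <= b -> 0 < f t0 -> 0 < RInt f a b.
Proof. intros Hab Hf Hpos Ht0 Hf0.
  assert (He : 0 < f t0 / 2) by lra.
  pose proof (Hf t0 Ht0 (ball (f t0) (mkposreal _ He)) (locally_ball _ _)) as L.
  unfold filtermap, within in L. destruct L as [d Hd].
  set (c1 := Rmax a (t0 - d / 2)). set (d1 := Rmin b (t0 + d / 2)).
  pose proof (cond_pos d) as Hdp.
  assert (Hc1 : a <= c1 <= t0) by (unfold c1, Rmax; destruct Rle_dec; lra).
  assert (Hd1 : t0 <= d1 <= b) by (unfold d1, Rmin; destruct Rle_dec; lra).
  assert (Hcd : c1 < d1).
  { unfold c1, d1, Rmax, Rmin. repeat destruct Rle_dec; lra. }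
  assert (Hin : forall s, c1 < s < d1 -> f t0 / 2 < f s).
  { intros s Hs. assert (Hs1 : t0 - d/2 < s < t0 + d/2).
    { split. eapply Rle_lt_trans; [apply Rmax_r|]. apply Hs. eapply Rlt_le_trans; [apply Hs|apply Rmin_r]. }
    assert (Hs2 : a <= s <= b) by lra.
    assert (B : ball t0 d s).
    { unfold ball; simpl; unfold AbsRing_ball, abs, minus, plus, opp; simpl.
      unfold Rabs; destruct Rcase_abs; lra. }
    specialize (Hd s B Hs2). unfold ball in Hd; simpl in Hd; unfold AbsRing_ball, abs, minus, plus, opp in Hd; simpl in Hd.
    unfold Rabs in Hd; destruct Rcase_abs in Hd; simpl in Hd; lra. }
  assert (Ex : forall u v, a <= u -> u <= v -> v <= b -> ex_RInt f u v).
  { intros u v H1 H2 H3. apply ex_RInt_cont_on; auto. apply (cont_on_sub a b); auto. }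
  assert (E : RInt f a b = RInt f a c1 + RInt f c1 d1 + RInt f d1 b).
  { rewrite <- (RInt_Chasles f a c1 b) by (apply Ex; lra).
    rewrite <- (RInt_Chasles f c1 d1 b) by (apply Ex; lra). unfold plus; simpl. ring. }
  rewrite E.
  assert (0 <= RInt f a c1) by (apply RInt_nonneg; try lra; [apply Ex; lra| intros; apply Hpos; lra]).
  assert (0 <= RInt f d1 b) by (apply RInt_nonneg; try lra; [apply Ex; lra| intros; apply Hpos; lra]).
  assert (RInt (fun _ => f t0 / 2) c1 d1 <= RInt f c1 d1).
  { apply RInt_le; try lra. apply ex_RInt_const. apply Ex; lra. intros s Hs. left; apply Hin; auto. }
  rewrite RInt_const in H1. unfold scal in H1; simpl in H1; unfold mult in H1; simpl in H1.
  assert (0 < (d1 - c1) * (f t0 / 2)) by (apply Rmult_lt_0_compat; lra). lra.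
Qed.

Lemma ln_ge a : 0 < a -> 1 - / a <= ln a.
Proof. intros Ha. pose proof (exp_ineq1_le (ln (/ a))). rewrite exp_ln in H by (apply Rinv_0_lt_compat; auto).
  rewrite ln_Rinv in H by auto. lra. Qed.

Lemma term_ge a b : 0 <= a -> 0 <= b -> (b = 0 -> a = 0) ->
  (sqrt a - sqrt b) * (sqrt a - sqrt b) <= b - a + xlogxy a b.
Proof. intros Ha Hb Hab. unfold xlogxy. destruct (Req_EM_T a 0) as [e|n].
  - subst. rewrite sqrt_0. replace ((0 - sqrt b) * (0 - sqrt b)) with (sqrt b * sqrt b) by ring.
    rewrite sqrt_sqrt; lra.
  - assert (Ha' : 0 < a) by lra.
    assert (Hb' : 0 < b) by (destruct Hb; auto; exfalso; apply n; apply Hab; auto).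
    pose proof (sqrt_lt_R0 a Ha'); pose proof (sqrt_lt_R0 b Hb').
    assert (E : a / b = (sqrt a / sqrt b) * (sqrt a / sqrt b)).
    { field_simplify. simpl. rewrite !Rmult_1_r, !sqrt_sqrt by lra. reflexivity. lra. lra. }
    rewrite E, ln_mult by (apply Rdiv_lt_0_compat; auto).
    pose proof (ln_ge (sqrt a / sqrt b) (Rdiv_lt_0_compat _ _ H H0)).
    assert (E2 : / (sqrt a / sqrt b) = sqrt b / sqrt a) by (field; lra).
    rewrite E2 in H1.
    assert (a * (2 * (1 - sqrt b / sqrt a)) <= a * (ln (sqrt a / sqrt b) + ln (sqrt a / sqrt b))) by (apply Rmult_le_compat_l; lra).
    assert (E3 : a * (2 * (1 - sqrt b / sqrt a)) = 2 * a - 2 * sqrt a * sqrt b).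
    { assert (K : a * (sqrt b / sqrt a) = sqrt a * sqrt b).
      { rewrite <- (sqrt_sqrt a) at 1 by lra. field. lra. }
      replace (a * (2 * (1 - sqrt b / sqrt a))) with (2 * a - 2 * (a * (sqrt b / sqrt a))) by ring.
      rewrite K. ring. }
    assert (E4 : (sqrt a - sqrt b) * (sqrt a - sqrt b) = a + b - 2 * sqrt a * sqrt b).
    { pose proof (sqrt_sqrt a ltac:(lra)). pose proof (sqrt_sqrt b ltac:(lra)). nra. }
    lra.
Qed.

Lemma sqdiff_pos a b : 0 <= a -> 0 <= b -> a <> b -> 0 < (sqrt a - sqrt b) * (sqrt a - sqrt b).
Proof. intros Ha Hb Hn. assert (sqrt a <> sqrt b).
  { intros E. apply Hn. rewrite <- (sqrt_sqrt a), <- (sqrt_sqrt b), E; auto. }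
  assert (sqrt a - sqrt b <> 0) by lra. pose proof (Rsqr_pos_lt _ H0). unfold Rsqr in H1. auto. Qed.

Lemma fsum_dirac2 {X : finite_type} (z : X) (f : X -> R) :
  fsum (fun y => f y * dirac y z) = f z.
Proof. rewrite (fsum_split z). rewrite (offdiag_ext z _ (fun _ => 0)).
  - rewrite offdiag_zero. unfold dirac. destruct (ft_eq_dec X z z); [lra|congruence].
  - intros y Hy. unfold dirac. destruct (ft_eq_dec X z y); [congruence|lra]. Qed.

Lemma transfer {X : finite_type} (Q Q' : R -> X -> X -> R) t (p : X -> R) :
  is_generator Q -> is_generator Q' ->
  (forall z w, w <> z -> p z * Q t z w = p z * Q' t z w) ->
  forall x, fsum (fun y => Q t y x * p y) = fsum (fun y => Q' t y x * p y).
Proof. intros [_ HG] [_ HG'] H x. rewrite (fsum_split x), (fsum_split x (fun y => Q' t y x * p y)).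
  f_equal.
  - rewrite HG, HG'. rewrite !Ropp_mult_distr_l_reverse. f_equal.
    rewrite Rmult_comm, <- offdiag_scal, Rmult_comm, <- offdiag_scal. apply offdiag_ext. intros; auto.
  - apply offdiag_ext. intros y Hy. rewrite Rmult_comm, H by auto. ring. Qed.


Lemma Qh_props {X : finite_type} T (Qpre : R -> X -> X -> R) h :
  0 <= T -> regular_generator T Qpre ->
  (forall x, cont_on 0 T (fun t => h t x)) -> (forall t x, 0 <= t <= T -> 0 < h t x) ->
  admissible T Qpre (Qhf T Qpre h) /\
  (forall t x y, 0 <= t <= T -> y <> x -> Qhf T Qpre h t x y = Qpre t x y * h t y / h t x) /\
  (forall t x y, 0 <= t <= T -> x <> y -> Qhf T Qpre h t x y = 0 -> Qpre t x y = 0).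
Proof.
  intros HT [[Hoff Hdg] HQc] hc hp.
  assert (HHp : forall t y, 0 < Hc T h t y) by (intros; unfold Hc; apply hp, clamp_in; auto).
  assert (HHe : forall t y, 0 <= t <= T -> Hc T h t y = h t y) by (intros; unfold Hc; rewrite clamp_id; auto).
  assert (E : forall t x y, 0 <= t <= T -> y <> x -> Qhf T Qpre h t x y = Qpre t x y * h t y / h t x).
  { intros. rewrite Qhf_off, !HHe; auto. }
  assert (Z : forall t x y, 0 <= t <= T -> x <> y -> Qhf T Qpre h t x y = 0 -> Qpre t x y = 0).
  { intros t x y Ht Hxy Hz. rewrite E in Hz by auto. pose proof (hp t x Ht); pose proof (hp t y Ht).
    unfold Rdiv in Hz. apply Rmult_integral in Hz. destruct Hz as [Hz|Hz].
    apply Rmult_integral in Hz. destruct Hz; auto. lra.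
    exfalso. assert (0 < / h t x) by (apply Rinv_0_lt_compat; auto). lra. }
  split; [|split]; auto.
  split; [split; [split|]|].
  - intros t x y Hxy. rewrite Qhf_off by auto. apply Rmult_le_pos; [apply Rmult_le_pos|].
    apply Hoff; auto. left; auto. left; apply Rinv_0_lt_compat; auto.
  - intros t x. unfold Qhf at 1. destruct (ft_eq_dec X x x); [|congruence]. f_equal.
    apply offdiag_ext. intros y Hy. rewrite Qhf_off; auto.
  - intros x y.
    assert (Hoffc : forall y, y <> x -> cont_on 0 T (fun t => Qhf T Qpre h t x y)).
    { intros z Hz. apply (cont_on_ext_eq 0 T (fun t => Qpre t x z * h t z / h t x)).
      intros; rewrite E; auto.
      apply cont_on_mult; auto. apply cont_on_mult; auto. apply cont_on_inv; auto.
      intros t Ht; pose proof (hp t x Ht); lra. }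
    destruct (ft_eq_dec X y x) as [e|ne].
    + subst y. apply (cont_on_ext_eq 0 T (fun t => - offdiag_sum x (fun z => Qhf T Qpre h t x z))).
      intros t Ht. unfold Qhf at 2. destruct (ft_eq_dec X x x); [|congruence]. f_equal.
      apply offdiag_ext. intros; rewrite Qhf_off; auto.
      apply cont_on_opp; auto. apply cont_on_offdiag; auto.
    + auto.
  - intros t x y Ht Hxy Hz. rewrite Qhf_off by auto. rewrite Hz. unfold Rdiv. ring.
Qed.

Lemma ph_forward {X : finite_type} T (Qpre : R -> X -> X -> R) h ppre x0 :
  0 <= T -> regular_generator T Qpre ->
  (forall x, cont_on 0 T (fun t => h t x)) ->
  (forall t x, 0 < t < T -> is_derive (fun s => h s x) t (- fsum (fun y => Qpre t x y * h t y))) ->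
  (forall t x, 0 <= t <= T -> 0 < h t x) ->
  kolmogorov_forward Qpre 0 T (dirac x0) ppre ->
  kolmogorov_forward (Qhf T Qpre h) 0 T (dirac x0) (fun t x => ppre t x * h t x / h 0 x0).
Proof.
  intros HT HQ hc hd hp Hk.
  destruct (Qh_props T Qpre h HT HQ hc hp) as [[[HQhg HQhc] _] [E _]].
  pose proof (kf_lin Qpre 0 T (dirac x0) ppre (proj1 HQ) Hk) as [Hpc Hpd].
  destruct Hk as [Hp0 _].
  assert (Z : 0 < h 0 x0) by (apply hp; lra).
  apply lin_kf; auto.
  - intros x. rewrite Hp0. unfold dirac. destruct (ft_eq_dec X x x0). subst. field. lra. unfold Rdiv. ring.
  - split.
    + intros x. apply cont_on_mult; auto. apply cont_on_mult; auto. apply cont_on_const.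
    + intros t x Ht. assert (Ht' : 0 <= t <= T) by lra.
      pose proof (is_derive_mult (fun u => ppre u x) (fun u => h u x) t _ _ (Hpd t x Ht) (hd t x Ht) ltac:(intros; apply Rmult_comm)) as D.
      pose proof (is_derive_scal (fun u => mult (ppre u x) (h u x)) t (/ h 0 x0) _ D) as D2.
      pose proof (hp t x Ht') as hx.
      assert (V : fsum (fun y => Qhf T Qpre h t y x * (ppre t y * h t y / h 0 x0)) =
        / h 0 x0 * (fsum (fun y => Qpre t y x * ppre t y) * h t x + ppre t x * - fsum (fun y => Qpre t x y * h t y))).
      { rewrite (fsum_split x (fun y => Qpre t y x * ppre t y)).
        rewrite (fsum_split x (fun y => Qpre t x y * h t y)).
        rewrite (fsum_split x (fun y => Qhf T Qpre h t y x * (ppre t y * h t y / h 0 x0))).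
        rewrite (proj2 HQhg t x).
        rewrite (offdiag_ext x (Qhf T Qpre h t x) (fun y => / h t x * (Qpre t x y * h t y))).
        2: { intros y Hy. rewrite E by auto. field. lra. }
        rewrite (offdiag_ext x (fun y => Qhf T Qpre h t y x * (ppre t y * h t y / h 0 x0))
                   (fun y => (h t x / h 0 x0) * (Qpre t y x * ppre t y))).
        2: { intros y Hy. rewrite E by auto. pose proof (hp t y Ht'). field. lra. }
        rewrite !offdiag_scal. field. lra. }
      rewrite V. eapply is_derive_ext; [|exact D2].
      intros u. unfold scal, mult; simpl. unfold mult; simpl. unfold Rdiv; ring.
Qed.


Theorem theorem4 (X : finite_type) (T alpha : R) (r : X -> R) (x0 : X)
  (Qpre Qs : R -> X -> X -> R) (ppre ps : R -> X -> R)
  (K : R -> X -> R -> X -> R) :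
  0 < T -> 0 < alpha ->
  regular_generator T Qpre ->
  admissible T Qpre Qs ->
  kolmogorov_forward Qpre 0 T (dirac x0) ppre ->
  kolmogorov_forward Qs 0 T (dirac x0) ps ->
  finite_cost T Qpre Qs ps ->
  (forall (Q : R -> X -> X -> R) (p : R -> X -> R),
      admissible T Qpre Q ->
      kolmogorov_forward Q 0 T (dirac x0) p ->
      finite_cost T Qpre Q p ->
      objective T alpha r Qpre Q p <= objective T alpha r Qpre Qs ps) ->
  (forall t x, 0 <= t <= T -> kolmogorov_forward Qs t T (dirac x) (K t x)) ->
  (forall t x, 0 <= t <= T -> ex_RInt (exp_kl Qpre Qs (K t x)) t T) ->
  (forall t, 0 <= t <= T ->
     exists c, 0 < c /\
       forall x, ps t x = c * (exp (value_fn T alpha r Qpre Qs K t x / alpha) * ppre t x))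
  /\
  (exists c, 0 < c /\ forall x, ps T x = c * (exp (r x / alpha) * ppre T x)).
Proof.
  intros HT Ha HQpre Hadm Hkpre Hks Hfin Hmax HK HKi.
  assert (HT0 : 0 <= T) by lra.
  pose proof Hadm as [[HQsg HQsc] HQsac].
  destruct (backward_exists T Qpre (fun x => exp (r x / alpha)) HT0 HQpre (fun x => exp_pos _))
    as [h [hT [hc [hd hp]]]].
  set (Qh := Qhf T Qpre h).
  destruct (Qh_props T Qpre h HT0 HQpre hc hp) as [HQhadm [HQhE HQhZ]].
  pose proof HQhadm as [[HQhg HQhc] HQhac].
  set (ph := fun t x => ppre t x * h t x / h 0 x0).
  assert (Hkh : kolmogorov_forward Qh 0 T (dirac x0) ph) by (apply ph_forward; auto).
  assert (Z : 0 < h 0 x0) by (apply hp; lra).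
  assert (Hfh : finite_cost T Qpre Qh ph).
  { unfold finite_cost.
    apply ex_RInt_ext with (f := fun t => fsum (fun x => ph t x * offdiag_sum x
        (fun y => Qh t x y * (ln (h t y) - ln (h t x)) + Qpre t x y - Qh t x y))).
    - intros t Ht. rewrite Rmin_left, Rmax_right in Ht by lra. unfold exp_kl. apply fsum_ext. intros x.
      assert (Ht' : 0 <= t <= T) by lra.
      assert (HH : forall y, Hc T h t y = h t y) by (intros; unfold Hc; rewrite clamp_id; auto).
      rewrite (kl_decomp T Qpre h Qh t x).
      + unfold Qh. rewrite Dkl_self, Rplus_0_l. fold Qh. f_equal. apply offdiag_ext. intros y Hy. rewrite !HH. reflexivity.
      + intros y Hy. apply (proj1 HQhg); auto.
      + intros y Hy. apply (proj1 (proj1 HQpre)); auto.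
      + intros y Hy. apply HQhac; auto.
      + intros y. unfold Hc. apply hp. apply clamp_in; lra.
    - apply ex_RInt_cont_on; auto. apply cont_on_fsum; auto. intros x. apply cont_on_mult; auto.
      + destruct Hkh as [_ [Hc' _]]. apply Hc'.
      + apply cont_on_offdiag; auto. intros y Hy. apply cont_on_minus; auto. apply cont_on_plus; auto.
        apply cont_on_mult; auto. apply cont_on_minus; auto; apply cont_on_ln; auto.
        apply (proj2 HQpre). }
  destruct (ident T alpha r Qpre Qh h 0 (dirac x0) ph ltac:(lra) Ha HQpre hT hc hd hp HQhg HQhc HQhac Hkh Hfh)
    as [_ Jh].
  assert (PDh0 : RInt (PDf T Qpre h Qh ph) 0 T = 0).
  { rewrite (RInt_ext _ (fun _ => 0)). rewrite RInt_const. unfold scal; simpl; unfold mult; simpl. ring.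
    intros t _. unfold PDf. rewrite <- (@fsum_zero X). apply fsum_ext. intros x. unfold Qh. rewrite Dkl_self. ring. }
  rewrite PDh0, fsum_dirac in Jh.
  destruct (ident T alpha r Qpre Qs h 0 (dirac x0) ps ltac:(lra) Ha HQpre hT hc hd hp HQsg HQsc HQsac Hks Hfin)
    as [PDsi Js].
  rewrite fsum_dirac in Js.
  specialize (Hmax Qh ph HQhadm Hkh Hfh). unfold objective in Hmax.
  rewrite Jh, Js in Hmax.
  assert (PDsneg : RInt (PDf T Qpre h Qs ps) 0 T <= 0).
  { assert (0 <= alpha * RInt (PDf T Qpre h Qs ps) 0 T -> False -> True) by auto.
    destruct (Rle_dec (RInt (PDf T Qpre h Qs ps) 0 T) 0) as [ok|ko]; auto. exfalso.
    assert (0 < alpha * RInt (PDf T Qpre h Qs ps) 0 T) by (apply Rmult_lt_0_compat; lra). lra. }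
  assert (HQsT : forall x y, cont_on 0 T (fun t => Qs t y x)) by (intros; apply HQsc).
  destruct (bound_mat 0 T (fun t x y => Qs t y x) HT0 HQsT) as [Cs [HCs0 HCs]].
  assert (Hps : forall t x, 0 <= t <= T -> 0 <= ps t x).
  { intros t x Ht. apply (metzler_pos 0 T (fun t x y => Qs t y x) ps Cs); auto.
    - intros; apply (proj1 HQsg); auto.
    - apply (kf_lin Qs 0 T (dirac x0) ps HQsg Hks).
    - apply (kf_lin Qs 0 T (dirac x0) ps HQsg Hks).
    - intros z. rewrite (proj1 Hks). unfold dirac. destruct ft_eq_dec; lra. }
  assert (Dterm : forall t x y, 0 <= t <= T -> y <> x ->
     (sqrt (Qs t x y) - sqrt (Qh t x y)) * (sqrt (Qs t x y) - sqrt (Qh t x y)) <=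
     Qh t x y - Qs t x y + xlogxy (Qs t x y) (Qh t x y)).
  { intros t x y Ht Hy. apply term_ge.
    - apply (proj1 HQsg); auto.
    - apply (proj1 HQhg); auto.
    - intros Hz. apply (HQsac t x y Ht (not_eq_sym Hy)). apply (HQhZ t x y Ht (not_eq_sym Hy) Hz). }
  assert (Dnn : forall t x, 0 <= t <= T -> 0 <= Dkl T Qpre h Qs t x).
  { intros t x Ht. unfold Dkl. apply offdiag_nonneg. intros y Hy. fold Qh.
    eapply Rle_trans; [|apply Dterm; auto]. apply Rle_0_sqr. }
  assert (Key : forall t x y, 0 <= t <= T -> y <> x -> 0 < ps t x -> Qs t x y = Qh t x y).
  { intros t x y Ht Hy Hp. destruct (Req_dec (Qs t x y) (Qh t x y)) as [e|ne]; auto. exfalso.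
    set (L := fun s => ps s x * ((sqrt (Qs s x y) - sqrt (Qh s x y)) * (sqrt (Qs s x y) - sqrt (Qh s x y)))).
    assert (HLc : cont_on 0 T L).
    { unfold L. apply cont_on_mult; auto. apply (proj1 (proj2 Hks)).
      apply cont_on_mult; auto; apply cont_on_minus; auto; apply cont_on_sqrt; auto. }
    assert (HLpos : 0 < RInt L 0 T).
    { apply (int_pos 0 T L t); auto.
      - intros s Hs. unfold L. apply Rmult_le_pos; auto. apply Rle_0_sqr.
      - unfold L. apply Rmult_lt_0_compat; auto. apply sqdiff_pos; auto.
        apply (proj1 HQsg); auto. apply (proj1 HQhg); auto. }
    assert (RInt L 0 T <= RInt (PDf T Qpre h Qs ps) 0 T).
    { apply RInt_le; [lra | apply ex_RInt_cont_on; auto; lra | exact PDsi | ].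
      intros s Hs. assert (Hs' : 0 <= s <= T) by lra. unfold L, PDf.
      eapply Rle_trans; [|apply (fsum_ge_term (fun z => ps s z * Dkl T Qpre h Qs s z) x)].
      - apply Rmult_le_compat_l; auto. unfold Dkl.
        eapply Rle_trans; [apply Dterm; auto|]. fold Qh.
        apply (offdiag_ge_term x (fun y => Qh s x y - Qs s x y + xlogxy (Qs s x y) (Qh s x y))); auto.
        intros z Hz. eapply Rle_trans; [|apply Dterm; auto]. apply Rle_0_sqr.
      - intros z. apply Rmult_le_pos; auto. }
    lra. }
  assert (Tr : forall t (q : X -> R), 0 <= t <= T -> (forall z, 0 <= q z) ->
            (forall z, 0 < q z -> 0 < ps t z) ->
            forall x, fsum (fun y => Qs t y x * q y) = fsum (fun y => Qh t y x * q y)).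
  { intros t q Ht Hq Hqp x. apply transfer; auto. intros z w Hw.
    destruct (Hq z) as [Hz|Hz].
    - rewrite Key; auto.
    - rewrite <- Hz. ring. }
  assert (HQhT : forall x y, cont_on 0 T (fun t => Qh t y x)) by (intros; apply HQhc).
  assert (Hoffh : forall t x y, 0 <= t <= T -> x <> y -> 0 <= Qh t y x).
  { intros; apply (proj1 HQhg); auto. }
  assert (Eps : forall t x, 0 <= t <= T -> ps t x = ph t x).
  { apply (lin_unique 0 T (fun t x y => Qh t y x)); auto.
    - destruct (kf_lin Qs 0 T (dirac x0) ps HQsg Hks) as [Hc1 Hd1]. split; auto.
      intros t x Ht. rewrite <- Tr; auto. lra. intros; apply Hps; lra.
    - apply (kf_lin Qh 0 T (dirac x0) ph HQhg Hkh).
    - intros x. rewrite (proj1 Hks), (proj1 Hkh). auto. }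
  split.
  2: { exists (/ h 0 x0). split. apply Rinv_0_lt_compat; auto.
       intros x. rewrite Eps by lra. unfold ph. rewrite hT. unfold Rdiv. ring. }
  intros t Ht. exists (/ h 0 x0). split. apply Rinv_0_lt_compat; auto.
  intros x. rewrite Eps by auto.
  destruct (Hps t x Ht) as [Hpos|Hzero].
  2: { rewrite Eps in Hzero by auto. unfold ph in Hzero.
       assert (ppre t x = 0).
       { pose proof (hp t x Ht). unfold Rdiv in Hzero.
         assert (0 < h t x * / h 0 x0) by (apply Rmult_lt_0_compat; auto; apply Rinv_0_lt_compat; auto).
         destruct (Req_dec (ppre t x) 0); auto. exfalso.
         assert (ppre t x * h t x * / h 0 x0 <> 0).
         { rewrite Rmult_assoc. apply Rmult_integral_contrapositive; split; lra. }
         lra. }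
       unfold ph. rewrite H. unfold Rdiv. ring. }
  assert (VV : value_fn T alpha r Qpre Qs K t x = alpha * ln (h t x)).
  { assert (Ht' : t <= T) by lra.
    assert (Kpos : forall y s z, t <= s <= T -> 0 <= K t y s z).
    { intros y s z Hs. apply (metzler_pos t T (fun t x y => Qs t y x) (K t y) Cs); auto.
      - intros; apply HCs; lra.
      - intros; apply (proj1 HQsg); auto.
      - apply (kf_lin Qs t T (dirac y) (K t y) HQsg (HK t y Ht)).
      - apply (kf_lin Qs t T (dirac y) (K t y) HQsg (HK t y Ht)).
      - intros w. rewrite (proj1 (HK t y Ht)). unfold dirac. destruct ft_eq_dec; lra. }
    assert (Chap : forall s z, t <= s <= T -> ps s z = fsum (fun y => ps t y * K t y s z)).
    { apply (lin_unique t T (fun t x y => Qs t y x)); auto.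
      - intros a b. apply (cont_on_sub 0 T); auto; lra.
      - intros s a b Hs Hab. apply (proj1 HQsg); auto.
      - destruct (kf_lin Qs 0 T (dirac x0) ps HQsg Hks) as [Hc1 Hd1]. split.
        + intros z; apply (cont_on_sub 0 T); auto; lra.
        + intros s z Hs; apply Hd1; lra.
      - split.
        + intros z. apply cont_on_fsum; auto. intros y. apply cont_on_mult; auto. apply cont_on_const.
          apply (proj1 (proj2 (HK t y Ht))).
        + intros s z Hs. 
          assert (D : forall y, is_derive (fun u => ps t y * K t y u z) s
                        (ps t y * fsum (fun w => Qs s w z * K t y s w))).
          { intros y. pose proof (kf_lin Qs t T (dirac y) (K t y) HQsg (HK t y Ht)) as [_ Hd2].
            pose proof (is_derive_scal (fun u => K t y u z) s (ps t y) _ (Hd2 s z Hs)) as D3.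
            exact D3. }
          pose proof (is_derive_fsum (fun u y => ps t y * K t y u z) _ s D) as D4.
          replace (fsum (fun y => Qs s y z * fsum (fun y0 => ps t y0 * K t y0 s y)))
            with (fsum (fun y => ps t y * fsum (fun w => Qs s w z * K t y s w))). exact D4.
          rewrite (fsum_ext (fun y => ps t y * fsum (fun w => Qs s w z * K t y s w))
                     (fun y => fsum (fun w => ps t y * (Qs s w z * K t y s w)))).
          2: { intros; rewrite fsum_scal; reflexivity. }
          rewrite fsum_swap. apply fsum_ext. intros w. rewrite <- fsum_scal. apply fsum_ext; intros; ring.
      - intros z. rewrite (fsum_ext _ (fun y => ps t y * dirac y z)).
        + rewrite fsum_dirac2. auto.
        + intros y. rewrite (proj1 (HK t y Ht)). reflexivity. }
    assert (Kpp : forall s z, t <= s <= T -> 0 < K t x s z -> 0 < ps s z).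
    { intros s z Hs Hk. rewrite Chap by auto.
      eapply Rlt_le_trans; [|apply (fsum_ge_term (fun y => ps t y * K t y s z) x)].
      apply Rmult_lt_0_compat; auto. intros y. apply Rmult_le_pos; auto; try (apply Hps; lra). }
    assert (HKh : kolmogorov_forward Qh t T (dirac x) (K t x)).
    { apply lin_kf; auto. apply (proj1 (HK t x Ht)).
      destruct (kf_lin Qs t T (dirac x) (K t x) HQsg (HK t x Ht)) as [Hc1 Hd1]. split; auto.
      intros s z Hs. rewrite <- Tr; auto. lra. intros; apply Kpos; lra.
      intros w Hw. apply Kpp; auto; lra. }
    assert (EK : forall s, t <= s <= T -> exp_kl Qpre Qs (K t x) s = exp_kl Qpre Qh (K t x) s).
    { intros s Hs. unfold exp_kl. apply fsum_ext. intros z.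
      destruct (Kpos x s z Hs) as [Hk|Hk].
      - f_equal. unfold kl_rate. apply offdiag_ext. intros w Hw.
        assert (Hps' : 0 < ps s z) by (apply Kpp; auto).
        rewrite (Key s z w ltac:(lra) Hw Hps'). reflexivity.
      - rewrite <- Hk. ring. }
    assert (HKhi : ex_RInt (exp_kl Qpre Qh (K t x)) t T).
    { apply ex_RInt_ext with (f := exp_kl Qpre Qs (K t x)).
      intros s Hs. rewrite Rmin_left, Rmax_right in Hs by lra. apply EK; lra. auto. }
    destruct (ident T alpha r Qpre Qh h t (dirac x) (K t x) Ht Ha HQpre hT hc hd hp HQhg HQhc HQhac HKh HKhi)
      as [_ J].
    assert (PD0 : RInt (PDf T Qpre h Qh (K t x)) t T = 0).
    { rewrite (RInt_ext _ (fun _ => 0)). rewrite RInt_const. unfold scal; simpl; unfold mult; simpl. ring.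
      intros s _. unfold PDf. rewrite <- (@fsum_zero X). apply fsum_ext. intros z. unfold Qh. rewrite Dkl_self. ring. }
    rewrite PD0, fsum_dirac in J.
    unfold value_fn. rewrite (RInt_ext (exp_kl Qpre Qs (K t x)) (exp_kl Qpre Qh (K t x))).
    rewrite J. ring.
    intros s Hs. rewrite Rmin_left, Rmax_right in Hs by lra. apply EK; lra. }
  rewrite VV. replace (alpha * ln (h t x) / alpha) with (ln (h t x)) by (field; lra).
  rewrite exp_ln by (apply hp; auto). unfold ph. unfold Rdiv. ring.
Qed.
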